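(* For any symmetric CQ channel $W$ with input alphabet $\mathbb Z_d$, $I(W)+I(W^\perp)=\log d$, where $I(W):=\max_{P_Z}\big(H(Z)-H(Z|W(Z))\big)$ is the Holevo (classical) capacity.
   Context: A CQ channel $W$ assigns to each $z\in\mathbb Z_d$ a density operator $W(z)$ on a finite-dimensional Hilbert space; it is symmetric if there are unitaries $U_z$ with $U_{z'}W(z)U_{z'}^*=W(z+z')$. $H(Z|W(Z))$ is the von Neumann conditional entropy of the CQ state $\sum_zP_Z(z)|z\rangle\langle z|\otimes W(z)$. Conjugate basis $|\tilde x\rangle=d^{-1/2}\sum_z\omega^{xz}|z\rangle$, $\omega=e^{2\pi i/d}$. Dual channel: purifications $|\varphi_z\rangle_{BD}$ of $W(z)$, isometry $V|z\rangle_A=|z\rangle_C|\varphi_z\rangle_{BD}$ ($\mathcal H_C\cong\mathbb C^d$), $|\theta_x\rangle=V|\tilde x\rangle_A$, $W^\perp(x)=\mathrm{Tr}_B|\theta_x\rangle\langle\theta_x|$. *)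

(* Defs.v *)
(* classical reals; finite-dimensional complex linear algebra is
   developed by hand (complex numbers as pairs of reals, matrices as functions
   nat -> nat -> C whose entries below the stated dimension are relevant). *)
From Stdlib Require Import Reals Lra Lia Arith ClassicalEpsilon.
Open Scope R_scope.

Definition C : Type := (R * R)%type.
Definition Cre (z : C) : R := fst z.
Definition Cim (z : C) : R := snd z.
Definition RtoC (x : R) : C := (x, 0).
Definition C0 : C := (0, 0).
Definition C1 : C := (1, 0).
Definition Cadd (a b : C) : C := (fst a + fst b, snd a + snd b).
Definition Cmul (a b : C) : C :=
  (fst a * fst b - snd a * snd b, fst a * snd b + snd a * fst b).
Definition Cconj (a : C) : C := (fst a, - snd a).
Definition Cexpi (t : R) : C := (cos t, sin t).

Fixpoint csum (n : nat) (f : nat -> C) : C :=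
  match n with O => C0 | S k => Cadd (csum k f) (f k) end.
Fixpoint rsum (n : nat) (f : nat -> R) : R :=
  match n with O => 0 | S k => rsum k f + f k end.

Definition Mat : Type := nat -> nat -> C.
Definition Vec : Type := nat -> C.

Definition meq (n : nat) (A B : Mat) : Prop :=
  forall i j, (i < n)%nat -> (j < n)%nat -> A i j = B i j.
Definition mmul (n : nat) (A B : Mat) : Mat :=
  fun i j => csum n (fun k => Cmul (A i k) (B k j)).
Definition adj (A : Mat) : Mat := fun i j => Cconj (A j i).
Definition idm : Mat := fun i j => if Nat.eqb i j then C1 else C0.
Definition diagm (lam : nat -> R) : Mat :=
  fun i j => if Nat.eqb i j then RtoC (lam i) else C0.
Definition mtrace (n : nat) (A : Mat) : C := csum n (fun i => A i i).
Definition outer (v : Vec) : Mat := fun i j => Cmul (v i) (Cconj (v j)).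

Definition unitary (n : nat) (U : Mat) : Prop :=
  meq n (mmul n U (adj U)) idm /\ meq n (mmul n (adj U) U) idm.

Definition density (n : nat) (rho : Mat) : Prop :=
  (forall i j, (i < n)%nat -> (j < n)%nat -> rho i j = Cconj (rho j i)) /\
  (forall v : Vec,
     0 <= Cre (csum n (fun i => csum n (fun j =>
               Cmul (Cconj (v i)) (Cmul (rho i j) (v j)))))) /\
  mtrace n rho = C1.

(* tensor conventions: index of (i,j) in C^a (x) C^b is i*b+j *)
Definition ptr1 (a b : nat) (M : Mat) : Mat :=
  fun i j => csum a (fun k => M (k * b + i)%nat (k * b + j)%nat).
Definition ptr2 (a b : nat) (M : Mat) : Mat :=
  fun i j => csum b (fun k => M (i * b + k)%nat (j * b + k)%nat).
(* partial trace over the middle factor of C^a (x) C^b (x) C^c;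
   result lives on C^a (x) C^c *)
Definition ptr_mid (a b c : nat) (M : Mat) : Mat :=
  fun i j => csum b (fun k =>
    M (((i / c) * b + k) * c + i mod c)%nat (((j / c) * b + k) * c + j mod c)%nat).

(* von Neumann entropy (natural log): -sum_i lam_i ln lam_i over the spectrum,
   obtained from a spectral decomposition rho = U diag(lam) U^*.
   (0 * ln 0 = 0 automatically.) *)
Definition vN_entropy (n : nat) (rho : Mat) : R :=
  epsilon (inhabits 0) (fun s => exists (U : Mat) (lam : nat -> R),
    unitary n U /\ meq n rho (mmul n (mmul n U (diagm lam)) (adj U)) /\
    s = - rsum n (fun i => lam i * ln (lam i))).

Definition prob (d : nat) (P : nat -> R) : Prop :=
  (forall z, (z < d)%nat -> 0 <= P z) /\ rsum d P = 1.

Definition shannon (d : nat) (P : nat -> R) : R :=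
  - rsum d (fun z => P z * ln (P z)).

Definition cq_channel (d n : nat) (W : nat -> Mat) : Prop :=
  forall z, (z < d)%nat -> density n (W z).

Definition symmetric_channel (d n : nat) (W : nat -> Mat) : Prop :=
  exists Us : nat -> Mat,
    (forall z, (z < d)%nat -> unitary n (Us z)) /\
    forall z z', (z < d)%nat -> (z' < d)%nat ->
      meq n (mmul n (mmul n (Us z') (W z)) (adj (Us z'))) (W ((z + z') mod d)%nat).

(* CQ state sum_z P(z) |z><z| (x) W(z) on C^d (x) C^n *)
Definition cq_state (n : nat) (P : nat -> R) (W : nat -> Mat) : Mat :=
  fun i j => if Nat.eqb (i / n)%nat (j / n)%nat
             then Cmul (RtoC (P (i / n)%nat)) (W (i / n)%nat (i mod n)%nat (j mod n)%nat)
             else C0.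

(* H(Z|W(Z)) = S(rho_ZB) - S(rho_B) *)
Definition cond_entropy (d n : nat) (W : nat -> Mat) (P : nat -> R) : R :=
  vN_entropy (d * n) (cq_state n P W) - vN_entropy n (ptr1 d n (cq_state n P W)).

(* the values H(Z) - H(Z|W(Z)) over input distributions; I(W) is their max *)
Definition holevo_values (d n : nat) (W : nat -> Mat) (r : R) : Prop :=
  exists P, prob d P /\ r = shannon d P - cond_entropy d n W P.

(* phi z : purification of W z on C^n (x) C^m (B (x) D) *)
Definition purification (n m : nat) (rho : Mat) (v : Vec) : Prop :=
  meq n (ptr2 n m (outer v)) rho.

(* |theta_x> = V |x~> = d^{-1/2} sum_z w^{xz} |z>_C |phi_z>_BD,
   a vector on C^d (x) C^n (x) C^m *)
Definition theta (d n m : nat) (phi : nat -> Vec) (x : nat) : Vec :=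
  fun idx => let z := (idx / (n * m))%nat in
    Cmul (RtoC (/ sqrt (INR d)))
      (Cmul (Cexpi (2 * PI * INR x * INR z / INR d)) (phi z (idx mod (n * m))%nat)).

(* W^perp(x) = Tr_B |theta_x><theta_x|, an operator on C^d (x) C^m *)
Definition dual_channel (d n m : nat) (phi : nat -> Vec) : nat -> Mat :=
  fun x => ptr_mid d n m (outer (theta d n m phi x)).

(* Main.v *)
Require Import Defs.
From Stdlib Require Import Reals Lra Lia Arith ClassicalEpsilon FunctionalExtensionality.
Import Defs.
From mathcomp Require all_boot all_order all_algebra complex Rstruct.
Open Scope R_scope.

Definition herm (n : nat) (A : Mat) : Prop :=
  forall i j, (i < n)%nat -> (j < n)%nat -> A i j = Cconj (A j i).

Module Spec.
Lemma csum_ext n f g : (forall k, (k < n)%nat -> f k = g k) -> csum n f = csum n g.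
Proof. induction n; intros H; simpl; [reflexivity|]. rewrite IHn, H; auto. Qed.

Lemma mmul_meq n A A' B B' : meq n A A' -> meq n B B' -> meq n (mmul n A B) (mmul n A' B').
Proof. intros HA HB i j hi hj. unfold mmul. apply csum_ext. intros k hk. rewrite HA, HB; auto. Qed.

Lemma adj_meq n A A' : meq n A A' -> meq n (adj A) (adj A').
Proof. intros HA i j hi hj. unfold adj. rewrite HA; auto. Qed.

Lemma meq_trans n A B D : meq n A B -> meq n B D -> meq n A D.
Proof. intros H1 H2 i j hi hj. rewrite H1; auto. Qed.
Arguments meq_trans {n A B D}.
Lemma meq_sym n A B : meq n A B -> meq n B A.
Proof. intros H1 i j hi hj. rewrite H1; auto. Qed.
Arguments meq_sym {n A B}.
Arguments mmul_meq {n A A' B B'}.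
Arguments adj_meq {n A A'}.

Import all_boot all_order all_algebra complex Rstruct.
Import GRing.Theory Num.Theory.
Local Open Scope ring_scope.
Local Open Scope sesquilinear_scope.

Notation RC := (Rdefinitions.R[i]).
Definition toc (z : Defs.C) : RC := Complex z.1 z.2.
Definition fromc (w : RC) : Defs.C := (complex.Re w, complex.Im w).

Lemma fromcK z : fromc (toc z) = z. Proof. by case: z. Qed.
Lemma tocK w : toc (fromc w) = w. Proof. by case: w. Qed.
Lemma toc_add a b : toc (Cadd a b) = toc a + toc b. Proof. by case: a; case: b. Qed.
Lemma toc_mul a b : toc (Cmul a b) = toc a * toc b. Proof. by case: a; case: b. Qed.
Lemma toc_conj a : toc (Cconj a) = (toc a)^*. Proof. by case: a. Qed.
Lemma toc0 : toc Defs.C0 = 0. Proof. by []. Qed.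
Lemma toc1 : toc Defs.C1 = 1. Proof. by []. Qed.
Lemma toc_csum n f : toc (csum n f) = \sum_(k < n) toc (f k).
Proof.
elim: n => [|n IH]; first by rewrite big_ord0.
by rewrite big_ord_recr /= toc_add IH.
Qed.

Section S.
Variable n' : nat.
Local Notation n := n'.+1.
Definition emb (M : 'M[RC]_n) : Mat := fun i j =>
  if (i < n)%N && (j < n)%N then fromc (M (inord i) (inord j)) else Defs.C0.

Lemma embE M i j : (i < n)%N -> (j < n)%N -> emb M i j = fromc (M (inord i) (inord j)).
Proof. by rewrite /emb => -> ->. Qed.

Lemma emb_mul A B i j : (i < n)%N -> (j < n)%N ->
  mmul n (emb A) (emb B) i j = emb (A *m B) i j.
Proof.
move=> hi hj; rewrite embE // /mmul.
rewrite -[csum _ _]fromcK toc_csum mxE; congr fromc.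
apply: eq_bigr => k _; rewrite toc_mul !embE // !tocK inord_val //.
Qed.

Lemma emb_adj A i j : (i < n)%N -> (j < n)%N -> adj (emb A) i j = emb (A^t*) i j.
Proof.
move=> hi hj; rewrite /adj !embE // !mxE.
apply: (can_inj fromcK); by rewrite toc_conj !tocK.
Qed.
Lemma emb_mmul_meq A B : meq n (mmul n (emb A) (emb B)) (emb (A *m B)).
Proof. by move=> i j /ltP hi /ltP hj; rewrite emb_mul. Qed.
Lemma emb_adj_meq A : meq n (adj (emb A)) (emb (A^t* )).
Proof. by move=> i j /ltP hi /ltP hj; rewrite emb_adj. Qed.
End S.
Lemma meq_refl n A : meq n A A. Proof. by []. Qed.

Lemma spectral_raw n (A : Mat) : herm n A ->
  exists U lam, unitary n U /\ meq n A (mmul n (mmul n U (diagm lam)) (adj U)).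
Proof.
case: n => [|n'] hA.
  exists (fun _ _ => Defs.C0), (fun _ => 0%R); split; first by split=> i j hi; lia.
  by move=> i j hi; lia.
pose B : 'M[RC]_n'.+1 := \matrix_(i, j) toc (A i j).
have Bh : B \is hermsymmx.
  apply/is_hermitianmxP; rewrite expr0 scale1r; apply/matrixP=> i j; rewrite !mxE.
  by rewrite (hA i j (ltP (ltn_ord i)) (ltP (ltn_ord j))) toc_conj.
have /orthomx_spectralP BE := hermitian_normalmx Bh.
have Dr := hermitian_spectral_diag_real Bh.
set P := spectralmx B in BE; set D := spectral_diag B in BE Dr.
have Pu : P \is unitarymx by apply: spectral_unitarymx.
rewrite invmx_unitary // in BE.
exists (emb n' (P^t* )), (fun i => complex.Re (D 0 (inord i))).
have hid : forall M : 'M[RC]_n'.+1, M = 1%:M -> meq n'.+1 (emb n' M) idm.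
  move=> M -> i j /ltP hi /ltP hj; rewrite embE // /idm !mxE.
  case: (PeanoNat.Nat.eqb_spec i j) => [->|hij]; first by rewrite eqxx.
  suff -> : (inord i == inord j :> 'I_n'.+1) = false by [].
  apply/eqP => /(congr1 val); rewrite /= !inordK //.
have hdiag : meq n'.+1 (diagm (fun i => complex.Re (D 0 (inord i)))) (emb n' (diag_mx D)).
  move=> i j /ltP hi /ltP hj; rewrite embE // /diagm !mxE.
  case: (PeanoNat.Nat.eqb_spec i j) => [->|hij].
    rewrite eqxx mulr1n /fromc /RtoC; congr pair.
    have := mxOverP Dr 0 (inord j).
    by case: (D 0 (inord j)) => a b /=; rewrite complex_real => /eqP ->.
  suff -> : (inord i == inord j :> 'I_n'.+1) = false by [].
  apply/eqP => /(congr1 val); rewrite /= !inordK //.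
split; first split.
- apply: (meq_trans _ (hid (P^t* *m P) _)); last by rewrite -invmx_unitary // mulVmx // unitarymx_unit.
  apply: meq_trans (mmul_meq (meq_refl _ _) (emb_adj_meq _ _)) _.
  by rewrite trmxCK; apply: emb_mmul_meq.
- apply: (meq_trans _ (hid (P *m P^t* ) _)); last by apply/unitarymxP.
  apply: meq_trans (mmul_meq (emb_adj_meq _ _) (meq_refl _ _)) _.
  by rewrite trmxCK; apply: emb_mmul_meq.
- have AB : meq n'.+1 A (emb n' B).
    by move=> i j /ltP hi /ltP hj; rewrite embE // mxE !inordK // fromcK.
  apply: meq_trans AB _; rewrite BE.
  apply: meq_sym; apply: meq_trans _ (emb_mmul_meq _ _ _).
  apply: mmul_meq; last by rewrite -{2}[P]trmxCK; apply: emb_adj_meq.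
  apply: meq_trans _ (emb_mmul_meq _ _ _).
  exact: mmul_meq.
Qed.
End Spec.

Lemma Ceq (a b : C) : fst a = fst b -> snd a = snd b -> a = b.
Proof. destruct a, b; simpl; intros -> ->; reflexivity. Qed.

Ltac cunf := unfold Cadd, Cmul, Cconj, RtoC, C0, C1, Cre, Cim, Cexpi in *; simpl in *.
Ltac cring := apply Ceq; cunf; ring.

Lemma Cadd_comm a b : Cadd a b = Cadd b a. Proof. cring. Qed.
Lemma Cadd_assoc a b c : Cadd (Cadd a b) c = Cadd a (Cadd b c). Proof. cring. Qed.
Lemma Cadd_0_l a : Cadd C0 a = a. Proof. cring. Qed.
Lemma Cadd_0_r a : Cadd a C0 = a. Proof. cring. Qed.
Lemma Cmul_comm a b : Cmul a b = Cmul b a. Proof. cring. Qed.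
Lemma Cmul_assoc a b c : Cmul (Cmul a b) c = Cmul a (Cmul b c). Proof. cring. Qed.
Lemma Cmul_0_l a : Cmul C0 a = C0. Proof. cring. Qed.
Lemma Cmul_0_r a : Cmul a C0 = C0. Proof. cring. Qed.
Lemma Cmul_1_l a : Cmul C1 a = a. Proof. cring. Qed.
Lemma Cmul_1_r a : Cmul a C1 = a. Proof. cring. Qed.
Lemma Cmul_add_l a b c : Cmul (Cadd a b) c = Cadd (Cmul a c) (Cmul b c). Proof. cring. Qed.
Lemma Cmul_add_r a b c : Cmul a (Cadd b c) = Cadd (Cmul a b) (Cmul a c). Proof. cring. Qed.
Lemma Cconj_conj a : Cconj (Cconj a) = a. Proof. cring. Qed.
Lemma Cconj_add a b : Cconj (Cadd a b) = Cadd (Cconj a) (Cconj b). Proof. cring. Qed.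
Lemma Cconj_mul a b : Cconj (Cmul a b) = Cmul (Cconj a) (Cconj b). Proof. cring. Qed.
Lemma Cconj_RtoC r : Cconj (RtoC r) = RtoC r. Proof. cring. Qed.
Lemma Cconj_0 : Cconj C0 = C0. Proof. cring. Qed.
Lemma RtoC_mul r s : RtoC (r * s) = Cmul (RtoC r) (RtoC s). Proof. cring. Qed.
Lemma RtoC_add r s : RtoC (r + s) = Cadd (RtoC r) (RtoC s). Proof. cring. Qed.
Lemma RtoC_0 : RtoC 0 = C0. Proof. reflexivity. Qed.
Lemma RtoC_1 : RtoC 1 = C1. Proof. reflexivity. Qed.

Definition nrm (z : C) : R := fst z * fst z + snd z * snd z.
Lemma nrm_ge0 z : 0 <= nrm z. Proof. unfold nrm; nra. Qed.
Lemma Cmul_conj_r z : Cmul z (Cconj z) = RtoC (nrm z). Proof. unfold nrm; cring. Qed.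
Lemma Cmul_conj_l z : Cmul (Cconj z) z = RtoC (nrm z). Proof. unfold nrm; cring. Qed.
Lemma nrm_mul a b : nrm (Cmul a b) = nrm a * nrm b. Proof. unfold nrm; cunf; ring. Qed.
Lemma nrm_RtoC r : nrm (RtoC r) = r * r. Proof. unfold nrm; cunf; ring. Qed.
Lemma nrm_conj a : nrm (Cconj a) = nrm a. Proof. unfold nrm; cunf; ring. Qed.

Lemma csum_ext n f g : (forall k, (k < n)%nat -> f k = g k) -> csum n f = csum n g.
Proof. induction n; intros H; simpl; [reflexivity|]. rewrite IHn, H; auto. Qed.
Lemma csum_add n f g : csum n (fun k => Cadd (f k) (g k)) = Cadd (csum n f) (csum n g).
Proof. induction n; simpl; [cring|]. rewrite IHn. cring. Qed.
Lemma csum_mul_l n c f : csum n (fun k => Cmul c (f k)) = Cmul c (csum n f).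
Proof. induction n; simpl; [cring|]. rewrite IHn. cring. Qed.
Lemma csum_mul_r n c f : csum n (fun k => Cmul (f k) c) = Cmul (csum n f) c.
Proof. induction n; simpl; [cring|]. rewrite IHn. cring. Qed.
Lemma csum_conj n f : Cconj (csum n f) = csum n (fun k => Cconj (f k)).
Proof. induction n; simpl; [cring|]. rewrite <- IHn. cring. Qed.
Lemma csum_zero n f : (forall k, (k < n)%nat -> f k = C0) -> csum n f = C0.
Proof. induction n; intros H; simpl; [reflexivity|]. rewrite IHn, H; auto. cring. Qed.
Lemma csum_swap n m f : csum n (fun i => csum m (fun j => f i j)) = csum m (fun j => csum n (fun i => f i j)).
Proof.
  induction n; simpl.
  - symmetry; apply csum_zero; auto.
  - rewrite IHn, <- csum_add. reflexivity.
Qed.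
Lemma csum_delta n i f : (i < n)%nat -> csum n (fun k => if Nat.eqb k i then f k else C0) = f i.
Proof.
  induction n; intros H; [lia|]. simpl.
  destruct (Nat.eqb_spec n i).
  - subst. rewrite csum_zero. cring. intros k hk. destruct (Nat.eqb_spec k i); [lia|auto].
  - rewrite IHn by lia. cring.
Qed.
Lemma csum_delta' n i f : (i < n)%nat -> csum n (fun k => if Nat.eqb i k then f k else C0) = f i.
Proof. intros H. rewrite <- (csum_delta n i f H). apply csum_ext. intros k _. rewrite Nat.eqb_sym. reflexivity. Qed.
Lemma csum_plus n m f : csum (n + m) f = Cadd (csum n f) (csum m (fun k => f (n + k)%nat)).
Proof. induction m; simpl. rewrite Nat.add_0_r; cring. rewrite Nat.add_succ_r; simpl. rewrite IHm. cring. Qed.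
Lemma csum_split a b f : csum (a * b) f = csum a (fun i => csum b (fun j => f (i * b + j)%nat)).
Proof.
  induction a; simpl; [reflexivity|].
  replace (b + a * b)%nat with (a * b + b)%nat by lia.
  rewrite csum_plus, IHa. reflexivity.
Qed.
Lemma csum_S_l n f : csum (S n) f = Cadd (f O) (csum n (fun k => f (S k))).
Proof. induction n; simpl. cring. simpl in IHn. rewrite IHn. cring. Qed.

Lemma Cre_add a b : Cre (Cadd a b) = Cre a + Cre b. Proof. reflexivity. Qed.

Lemma rsum_ext n f g : (forall k, (k < n)%nat -> f k = g k) -> rsum n f = rsum n g.
Proof. induction n; intros H; simpl; [reflexivity|]. rewrite IHn, H; auto. Qed.
Lemma rsum_add n f g : rsum n (fun k => f k + g k) = rsum n f + rsum n g.
Proof. induction n; simpl; [ring|]. rewrite IHn. ring. Qed.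
Lemma rsum_opp n f : rsum n (fun k => - f k) = - rsum n f.
Proof. induction n; simpl; [ring|]. rewrite IHn. ring. Qed.
Lemma rsum_mul_l n c f : rsum n (fun k => c * f k) = c * rsum n f.
Proof. induction n; simpl; [ring|]. rewrite IHn. ring. Qed.
Lemma rsum_mul_r n c f : rsum n (fun k => f k * c) = rsum n f * c.
Proof. induction n; simpl; [ring|]. rewrite IHn. ring. Qed.
Lemma rsum_zero n f : (forall k, (k < n)%nat -> f k = 0) -> rsum n f = 0.
Proof. induction n; intros H; simpl; [reflexivity|]. rewrite IHn, H; auto. ring. Qed.
Lemma rsum_swap n m f : rsum n (fun i => rsum m (fun j => f i j)) = rsum m (fun j => rsum n (fun i => f i j)).
Proof.
  induction n; simpl.
  - symmetry; apply rsum_zero; auto.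
  - rewrite IHn, <- rsum_add. reflexivity.
Qed.
Lemma rsum_le n f g : (forall k, (k < n)%nat -> f k <= g k) -> rsum n f <= rsum n g.
Proof. induction n; intros H; simpl; [lra|]. apply Rplus_le_compat. apply IHn. intros k hk; apply H; lia. apply H; lia. Qed.
Lemma rsum_ge0 n f : (forall k, (k < n)%nat -> 0 <= f k) -> 0 <= rsum n f.
Proof. intros H. replace 0 with (rsum n (fun _ => 0)) by (apply rsum_zero; auto). apply rsum_le; auto. Qed.
Lemma rsum_eq0 n f : (forall k, (k < n)%nat -> 0 <= f k) -> rsum n f = 0 -> forall k, (k < n)%nat -> f k = 0.
Proof.
  induction n; intros H E k hk; [lia|]. simpl in E.
  assert (0 <= rsum n f) by (apply rsum_ge0; intros; apply H; lia). assert (0 <= f n) by (apply H; lia).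
  destruct (Nat.eq_dec k n). subst; lra. apply IHn; [intros; apply H; lia|lra|lia].
Qed.
Lemma rsum_plus n m f : rsum (n + m) f = rsum n f + rsum m (fun k => f (n + k)%nat).
Proof. induction m; simpl. rewrite Nat.add_0_r; ring. rewrite Nat.add_succ_r; simpl. rewrite IHm. ring. Qed.
Lemma rsum_split a b f : rsum (a * b) f = rsum a (fun i => rsum b (fun j => f (i * b + j)%nat)).
Proof.
  induction a; simpl; [reflexivity|].
  replace (b + a * b)%nat with (a * b + b)%nat by lia.
  rewrite rsum_plus, IHa. reflexivity.
Qed.
Lemma rsum_delta n i f : (i < n)%nat -> rsum n (fun k => if Nat.eqb k i then f k else 0) = f i.
Proof.
  induction n; intros H; [lia|]. simpl.
  destruct (Nat.eqb_spec n i).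
  - subst. rewrite rsum_zero. ring. intros k hk. destruct (Nat.eqb_spec k i); [lia|auto].
  - rewrite IHn by lia. ring.
Qed.
Lemma Cre_csum n f : Cre (csum n f) = rsum n (fun k => Cre (f k)).
Proof. induction n; simpl; [reflexivity|]. rewrite <- IHn. reflexivity. Qed.
Lemma csum_RtoC n f : csum n (fun k => RtoC (f k)) = RtoC (rsum n f).
Proof. induction n; simpl; [reflexivity|]. rewrite IHn. cring. Qed.
Lemma rsum_const n c : rsum n (fun _ => c) = INR n * c.
Proof. induction n; simpl rsum; [simpl; ring|]. rewrite IHn, S_INR. ring. Qed.

Definition req (r c : nat) (A B : Mat) : Prop :=
  forall i j, (i < r)%nat -> (j < c)%nat -> A i j = B i j.
Lemma req_refl r c A : req r c A A. Proof. intros i j _ _; reflexivity. Qed.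
Lemma req_sym r c A B : req r c A B -> req r c B A. Proof. intros H i j hi hj; symmetry; auto. Qed.
Lemma req_trans r c A B D : req r c A B -> req r c B D -> req r c A D.
Proof. intros H1 H2 i j hi hj; rewrite H1; auto. Qed.
Arguments req_trans {r c A B D}.
Arguments req_sym {r c A B}.

Lemma mmul_assoc p q A B D i j : mmul q (mmul p A B) D i j = mmul p A (mmul q B D) i j.
Proof.
  unfold mmul. rewrite <- (csum_ext _ (fun k => csum p (fun l => Cmul (A i l) (Cmul (B l k) (D k j))))).
  2:{ intros k _. rewrite <- csum_mul_r. apply csum_ext; intros; symmetry; apply Cmul_assoc. }
  rewrite csum_swap. apply csum_ext; intros. apply csum_mul_l.
Qed.
Lemma adj_mmul p A B i j : adj (mmul p A B) i j = mmul p (adj B) (adj A) i j.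
Proof. unfold adj, mmul. rewrite csum_conj. apply csum_ext; intros. rewrite Cconj_mul. apply Cmul_comm. Qed.
Lemma adj_adj A i j : adj (adj A) i j = A i j.
Proof. unfold adj. apply Cconj_conj. Qed.
Lemma mmul_req a p c A A' B B' : req a p A A' -> req p c B B' -> req a c (mmul p A B) (mmul p A' B').
Proof. intros HA HB i j hi hj. unfold mmul. apply csum_ext. intros k hk. rewrite HA, HB; auto. Qed.
Arguments mmul_req {a p c A A' B B'}.
Lemma adj_req r c A B : req r c A B -> req c r (adj A) (adj B).
Proof. intros H i j hi hj. unfold adj. rewrite H; auto. Qed.
Arguments adj_req {r c A B}.
Lemma mmul_idm_l a A i j : (i < a)%nat -> mmul a idm A i j = A i j.
Proof.
  intros hi. unfold mmul, idm. rewrite <- (csum_delta' a i (fun k => A k j)) by auto.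
  apply csum_ext. intros k _. destruct (Nat.eqb i k); cring.
Qed.
Lemma mmul_idm_r a A i j : (j < a)%nat -> mmul a A idm i j = A i j.
Proof.
  intros hj. unfold mmul, idm. rewrite <- (csum_delta a j (fun k => A i k)) by auto.
  apply csum_ext. intros k _. destruct (Nat.eqb k j); cring.
Qed.
Lemma mmul_diag_l n lam A i j : (i < n)%nat -> mmul n (diagm lam) A i j = Cmul (RtoC (lam i)) (A i j).
Proof.
  intros hi. unfold mmul, diagm. rewrite <- (csum_delta' n i (fun k => Cmul (RtoC (lam k)) (A k j))) by auto.
  apply csum_ext. intros k _. destruct (Nat.eqb i k) eqn:E; [apply Nat.eqb_eq in E; subst; auto|cring].
Qed.
Lemma mmul_diag_r n lam A i j : (j < n)%nat -> mmul n A (diagm lam) i j = Cmul (A i j) (RtoC (lam j)).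
Proof.
  intros hj. unfold mmul, diagm. rewrite <- (csum_delta n j (fun k => Cmul (A i k) (RtoC (lam k)))) by auto.
  apply csum_ext. intros k _. destruct (Nat.eqb k j) eqn:E; [apply Nat.eqb_eq in E; subst; auto|cring].
Qed.

Lemma req_of_eq r c A B : (forall i j, A i j = B i j) -> req r c A B.
Proof. intros H i j _ _; auto. Qed.

Definition decomp (n : nat) (rho U : Mat) (lam : nat -> R) : Prop :=
  unitary n U /\ meq n rho (mmul n (mmul n U (diagm lam)) (adj U)).

Lemma diag_form n b rho U lam V j :
  meq n rho (mmul n (mmul n U (diagm lam)) (adj U)) -> (j < b)%nat ->
  mmul n (adj V) (mmul n rho V) j j =
  RtoC (rsum n (fun l => lam l * nrm (mmul n (adj U) V l j))).
Proof.
  intros H hj.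
  assert (E : req b b (mmul n (adj V) (mmul n rho V))
             (mmul n (mmul n (mmul n (adj V) U) (diagm lam)) (mmul n (adj U) V))).
  { apply (req_trans (mmul_req (req_refl _ _ _) (mmul_req H (req_refl _ _ _)))).
    apply req_of_eq; intros i k.
    transitivity (mmul n (adj V) (mmul n (mmul n U (diagm lam)) (mmul n (adj U) V)) i k).
    { unfold mmul at 1 3. apply csum_ext; intros l hl. f_equal. apply mmul_assoc. }
    rewrite <- mmul_assoc. unfold mmul at 1 4. apply csum_ext; intros l hl. f_equal.
    symmetry; apply mmul_assoc. }
  rewrite E by auto. unfold mmul at 1. rewrite <- csum_RtoC. apply csum_ext. intros l hl.
  rewrite mmul_diag_r by auto.
  assert (mmul n (adj V) U j l = Cconj (mmul n (adj U) V l j)).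
  { unfold mmul, adj. rewrite csum_conj. apply csum_ext; intros; cring. }
  rewrite H0. rewrite RtoC_mul, <- Cmul_conj_l. cring.
Qed.

Lemma mmul_assocM p q A B D : mmul q (mmul p A B) D = mmul p A (mmul q B D).
Proof. do 2 (apply functional_extensionality; intro). apply mmul_assoc. Qed.
Lemma adj_mmulM p A B : adj (mmul p A B) = mmul p (adj B) (adj A).
Proof. do 2 (apply functional_extensionality; intro). apply adj_mmul. Qed.
Lemma adj_adjM A : adj (adj A) = A.
Proof. do 2 (apply functional_extensionality; intro). apply adj_adj. Qed.
Lemma idm_l_req a c A : req a c (mmul a idm A) A.
Proof. intros i j hi hj. apply mmul_idm_l; auto. Qed.
Lemma idm_r_req r a A : req r a (mmul a A idm) A.
Proof. intros i j hi hj. apply mmul_idm_r; auto. Qed.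
Lemma adj_diagm lam : adj (diagm lam) = diagm lam.
Proof.
  do 2 (apply functional_extensionality; intro). unfold adj, diagm.
  rewrite Nat.eqb_sym. destruct (Nat.eqb_spec x x0); [subst|]; cring.
Qed.
Lemma meq_req n A B : meq n A B -> req n n A B. Proof. auto. Qed.

Definition hh (x : R) : R := x * ln x.
Lemma hh0 : hh 0 = 0. Proof. unfold hh; ring. Qed.

Lemma ln_le_sub1 z : 0 < z -> ln z <= z - 1.
Proof. intros hz. pose proof (exp_ineq1_le (ln z)). rewrite exp_ln in H by auto. lra. Qed.

Lemma hh_tangent t y : 0 < t -> 0 <= y -> y * ln t + y - t <= hh y.
Proof.
  intros ht hy. unfold hh. destruct (Req_dec y 0) as [->|ny]. lra.
  assert (hy' : 0 < y) by lra.
  pose proof (ln_le_sub1 (t / y) ltac:(apply Rdiv_lt_0_compat; lra)).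
  unfold Rdiv in H. rewrite ln_mult, ln_Rinv in H by (try apply Rinv_0_lt_compat; lra).
  assert (y * (ln t + - ln y) <= y * (t * / y - 1)) by (apply Rmult_le_compat_l; lra).
  replace (y * (t * / y - 1)) with (t - y) in H0 by (field; lra). lra.
Qed.

Lemma jensen K (w a : nat -> R) :
  (forall k, (k < K)%nat -> 0 <= w k) -> (forall k, (k < K)%nat -> 0 <= a k) ->
  rsum K w <= 1 ->
  hh (rsum K (fun k => w k * a k)) <= rsum K (fun k => w k * hh (a k)).
Proof.
  intros hw ha hs. set (m := rsum K (fun k => w k * a k)).
  assert (hm : 0 <= m) by (apply rsum_ge0; intros; apply Rmult_le_pos; auto).
  assert (tang : forall t, 0 < t -> m * ln t + m - t * rsum K w <= rsum K (fun k => w k * hh (a k))).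
  { intros t ht.
    assert (rsum K (fun k => w k * (a k * ln t + a k - t)) <= rsum K (fun k => w k * hh (a k))).
    { apply rsum_le; intros k hk. apply Rmult_le_compat_l; auto. apply hh_tangent; auto. }
    replace (rsum K (fun k => w k * (a k * ln t + a k - t))) with
      (rsum K (fun k => w k * a k) * ln t + rsum K (fun k => w k * a k) - t * rsum K w) in H; [exact H|].
    rewrite <- rsum_mul_r, <- rsum_mul_l.
    unfold Rminus. rewrite <- rsum_opp, <- !rsum_add. apply rsum_ext; intros; ring. }
  destruct (Req_dec m 0) as [E|E].
  - rewrite E, hh0. set (X := rsum K (fun k => w k * hh (a k))) in *.
    destruct (Rle_lt_dec 0 X) as [|hX]; auto.
    specialize (tang (- X / 2) ltac:(lra)). rewrite E in tang.
    assert (0 <= rsum K w) by (apply rsum_ge0; auto).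
    assert (X <= X * rsum K w) by nra.
    lra.
  - specialize (tang m ltac:(lra)).
    assert (m * rsum K w <= m) by nra.
    change (hh m) with (m * ln m). lra.
Qed.

Lemma rsum_ge_term n f j : (forall k, (k < n)%nat -> 0 <= f k) -> (j < n)%nat -> f j <= rsum n f.
Proof.
  induction n; intros H hj; [lia|]. simpl.
  assert (0 <= rsum n f) by (apply rsum_ge0; intros; apply H; lia).
  destruct (Nat.eq_dec j n). subst. lra.
  assert (f j <= rsum n f) by (apply IHn; [intros; apply H; lia|lia]).
  assert (0 <= f n) by (apply H; lia). lra.
Qed.

Lemma diag_entry_self a b T alpha i :
  meq a (mmul b T (adj T)) (diagm alpha) -> (i < a)%nat ->
  alpha i = rsum b (fun j => nrm (T i j)).
Proof.
  intros H hi. specialize (H i i hi hi). unfold diagm in H. rewrite Nat.eqb_refl in H.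
  unfold mmul, adj in H. rewrite (csum_ext _ _ (fun j => RtoC (nrm (T i j)))) in H
    by (intros; apply Cmul_conj_r).
  rewrite csum_RtoC in H. unfold RtoC in H. injection H. auto.
Qed.

Section Schur.
Variables (a b : nat) (T : Mat) (alpha : nat -> R).
Hypothesis H : meq a (mmul b T (adj T)) (diagm alpha).

Let halpha i : (i < a)%nat -> alpha i = rsum b (fun j => nrm (T i j)).
Proof. apply diag_entry_self; auto. Qed.
Let hpos i : (i < a)%nat -> 0 <= alpha i.
Proof. intros hi. rewrite halpha by auto. apply rsum_ge0; intros; apply nrm_ge0. Qed.

Let c (i : nat) : R := if Rlt_dec 0 (alpha i) then / sqrt (alpha i) else 0.
Let cc i : (i < a)%nat -> c i * c i * alpha i = if Rlt_dec 0 (alpha i) then 1 else 0.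
Proof.
  intros hi. unfold c. destruct (Rlt_dec 0 (alpha i)); [|ring].
  pose proof (sqrt_lt_R0 _ r). rewrite <- (sqrt_sqrt (alpha i)) at 3 by lra. field. lra.
Qed.
Let ccn i j : (i < a)%nat -> (j < b)%nat -> c i * c i * alpha i * nrm (T i j) = nrm (T i j).
Proof.
  intros hi hj. rewrite cc by auto. destruct (Rlt_dec 0 (alpha i)). ring.
  assert (alpha i = 0) by (pose proof (hpos i hi); lra).
  rewrite (rsum_eq0 b (fun j => nrm (T i j))) by (auto; try (intros; apply nrm_ge0); rewrite <- halpha; auto).
  ring.
Qed.

Let S i j := Cmul (RtoC (c i)) (T i j).

Lemma schur_bessel j : (j < b)%nat -> rsum a (fun i => c i * c i * nrm (T i j)) <= 1.
Proof.
  intros hj. set (p := rsum a (fun i => c i * c i * nrm (T i j))).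
  set (Q := fun l => csum a (fun i => Cmul (Cconj (S i j)) (S i l))).
  assert (KEY : csum b (fun l => Cmul (Q l) (Cconj (Q l))) = RtoC p).
  { transitivity (csum b (fun l => csum a (fun i => csum a (fun k =>
        Cmul (Cmul (Cconj (S i j)) (S k j)) (Cmul (S i l) (Cconj (S k l))))))).
    { apply csum_ext; intros l hl. unfold Q. rewrite csum_conj, <- csum_mul_r.
      apply csum_ext; intros i hi. rewrite <- csum_mul_l. apply csum_ext; intros k hk. cring. }
    rewrite csum_swap. transitivity (csum a (fun i => RtoC (c i * c i * nrm (T i j)))).
    2:{ apply csum_RtoC. }
    apply csum_ext; intros i hi. rewrite csum_swap.
    transitivity (csum a (fun k => if Nat.eqb i k then
        Cmul (Cmul (Cconj (S i j)) (S k j)) (RtoC (c i * c k * alpha i)) else C0)).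
    { apply csum_ext; intros k hk. rewrite csum_mul_l.
      assert (E : csum b (fun l => Cmul (S i l) (Cconj (S k l))) =
                  Cmul (RtoC (c i * c k)) (mmul b T (adj T) i k)).
      { unfold mmul, adj. rewrite <- csum_mul_l. apply csum_ext; intros. unfold S. cring. }
      rewrite E, H by auto. unfold diagm.
      destruct (Nat.eqb_spec i k). subst. cring. cring. }
    rewrite csum_delta' by auto. unfold S.
    rewrite <- (ccn i j) by auto. unfold nrm; cring. }
  assert (hp : 0 <= p) by (apply rsum_ge0; intros; pose proof (nrm_ge0 (T k j)); unfold c;
          destruct (Rlt_dec 0 (alpha k)); nra).
  rewrite (csum_ext _ _ (fun l => RtoC (nrm (Q l)))) in KEY by (intros; apply Cmul_conj_r).
  rewrite csum_RtoC in KEY. injection KEY; intros KEY'.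
  assert (nrm (Q j) <= rsum b (fun l => nrm (Q l))) by (apply (rsum_ge_term b (fun l => nrm (Q l)) j); auto; intros; apply nrm_ge0).
  assert (Q j = RtoC p).
  { unfold Q, p. rewrite <- csum_RtoC. apply csum_ext; intros i hi. unfold S. unfold nrm; cring. }
  rewrite H1, nrm_RtoC in H0. nra.
Qed.

Lemma schur : rsum b (fun j => hh (rsum a (fun i => nrm (T i j)))) <= rsum a (fun i => hh (alpha i)).
Proof.
  set (w := fun i j => c i * c i * nrm (T i j)).
  assert (hw : forall i j, 0 <= w i j).
  { intros. unfold w, c. pose proof (nrm_ge0 (T i j)). destruct (Rlt_dec 0 (alpha i)); nra. }
  apply Rle_trans with (rsum b (fun j => rsum a (fun i => w i j * hh (alpha i)))).
  - apply rsum_le; intros j hj.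
    replace (rsum a (fun i => nrm (T i j))) with (rsum a (fun i => w i j * alpha i)).
    + apply jensen; auto. apply schur_bessel; auto.
    + apply rsum_ext; intros i hi. unfold w. transitivity (c i * c i * alpha i * nrm (T i j)); [ring|apply ccn; auto].
  - rewrite rsum_swap. apply Req_le. apply rsum_ext; intros i hi.
    rewrite rsum_mul_r. unfold w. rewrite rsum_mul_l, <- halpha by auto.
    rewrite cc by auto. destruct (Rlt_dec 0 (alpha i)). ring.
    assert (alpha i = 0) by (pose proof (hpos i hi); lra). rewrite H0, hh0. ring.
Qed.
End Schur.

Definition good (n : nat) (rho : Mat) : Prop :=
  exists U lam, decomp n rho U lam /\ forall i, (i < n)%nat -> 0 <= lam i.

Lemma nrm_idm l j : nrm (idm l j) = if Nat.eqb l j then 1 else 0.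
Proof. unfold idm. destruct (Nat.eqb l j); unfold nrm; cunf; ring. Qed.

Lemma rsum_delta_r n j f : (j < n)%nat -> rsum n (fun l => f l * (if Nat.eqb l j then 1 else 0)) = f j.
Proof.
  intros hj. rewrite <- (rsum_delta n j f hj). apply rsum_ext; intros.
  destruct (Nat.eqb k j); ring.
Qed.

Lemma decomp_diag n rho U lam j : decomp n rho U lam -> (j < n)%nat ->
  mmul n (adj U) (mmul n rho U) j j = RtoC (lam j).
Proof.
  intros [[U1 U2] HD] hj. rewrite (diag_form n n rho U lam U j HD hj). f_equal.
  rewrite (rsum_ext _ _ (fun l => lam l * (if Nat.eqb l j then 1 else 0))).
  - apply rsum_delta_r; auto.
  - intros l hl. rewrite U2, nrm_idm by auto. reflexivity.
Qed.

Lemma decomp_eig_nonneg n rho U lam V mu :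
  decomp n rho U lam -> (forall i, (i < n)%nat -> 0 <= lam i) ->
  decomp n rho V mu -> forall j, (j < n)%nat -> 0 <= mu j.
Proof.
  intros HU hl HV j hj. pose proof (decomp_diag n rho V mu j HV hj).
  destruct HU as [_ HD]. rewrite (diag_form n n rho U lam V j HD hj) in H.
  injection H; intros <-. apply rsum_ge0; intros. apply Rmult_le_pos; auto. apply nrm_ge0.
Qed.

Lemma unitary_prod_adj n U V : unitary n U -> unitary n V ->
  meq n (mmul n (mmul n (adj U) V) (adj (mmul n (adj U) V))) idm.
Proof.
  intros [U1 U2] [V1 V2]. rewrite adj_mmulM, adj_adjM, !mmul_assocM, <- (mmul_assocM n n V).
  apply (req_trans (mmul_req (req_refl _ _ _) (mmul_req V1 (req_refl _ _ _)))).
  apply (req_trans (mmul_req (req_refl _ _ _) (idm_l_req _ _ _))). auto.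
Qed.

Lemma decomp_col n rho U lam V mu j : decomp n rho U lam -> decomp n rho V mu -> (j < n)%nat ->
  mu j = rsum n (fun l => lam l * nrm (mmul n (adj U) V l j)).
Proof.
  intros HU HV hj. pose proof (decomp_diag n rho V mu j HV hj).
  destruct HU as [_ HD]. rewrite (diag_form n n rho U lam V j HD hj) in H.
  injection H; auto.
Qed.

Lemma ent_half n rho U lam V mu :
  decomp n rho U lam -> (forall i, (i < n)%nat -> 0 <= lam i) -> decomp n rho V mu ->
  rsum n (fun j => hh (mu j)) <= rsum n (fun i => hh (lam i)).
Proof.
  intros HU hl HV.
  set (A := mmul n (adj U) V).
  set (T := fun i j => Cmul (RtoC (sqrt (lam i))) (A i j)).
  assert (HT : meq n (mmul n T (adj T)) (diagm lam)).
  { intros i k hi hk.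
    transitivity (Cmul (RtoC (sqrt (lam i) * sqrt (lam k))) (mmul n A (adj A) i k)).
    { unfold mmul, adj, T. rewrite <- csum_mul_l. apply csum_ext; intros; cring. }
    rewrite (unitary_prod_adj n U V (proj1 HU) (proj1 HV)) by auto.
    unfold idm, diagm. destruct (Nat.eqb_spec i k). subst. rewrite sqrt_sqrt by auto. cring. cring. }
  pose proof (schur n n T lam HT).
  replace (rsum n (fun j => hh (mu j))) with (rsum n (fun j => hh (rsum n (fun i => nrm (T i j))))); auto.
  apply rsum_ext; intros j hj. f_equal. rewrite (decomp_col n rho U lam V mu j HU HV hj).
  apply rsum_ext; intros i hi. unfold T. rewrite nrm_mul, nrm_RtoC, sqrt_sqrt by auto. reflexivity.
Qed.

Lemma ent_unique n rho U lam V mu :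
  decomp n rho U lam -> (forall i, (i < n)%nat -> 0 <= lam i) -> decomp n rho V mu ->
  rsum n (fun j => hh (mu j)) = rsum n (fun i => hh (lam i)).
Proof.
  intros HU hl HV. apply Rle_antisym. eapply ent_half; eauto.
  apply (ent_half n rho V mu U lam HV); auto. exact (decomp_eig_nonneg n rho U lam V mu HU hl HV).
Qed.

Lemma ent_spec n rho U lam : good n rho -> decomp n rho U lam ->
  vN_entropy n rho = - rsum n (fun i => hh (lam i)).
Proof.
  intros [U0 [l0 [H0 hl0]]] HD. unfold vN_entropy.
  match goal with |- epsilon ?i ?P = _ => assert (E : exists s, P s) end.
  { exists (- rsum n (fun i => l0 i * ln (l0 i))). exists U0, l0. destruct H0. auto. }
  pose proof (epsilon_spec _ _ E) as [U1 [l1 [h1 [h2 ->]]]].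
  change (- rsum n (fun i => hh (l1 i)) = - rsum n (fun i => hh (lam i))).
  rewrite (ent_unique n rho U0 l0 U1 l1), (ent_unique n rho U0 l0 U lam); auto. split; auto.
Qed.

Lemma schur_unitary n U V lam : unitary n U -> unitary n V -> (forall i, (i < n)%nat -> 0 <= lam i) ->
  rsum n (fun j => hh (rsum n (fun l => lam l * nrm (mmul n (adj U) V l j)))) <= rsum n (fun i => hh (lam i)).
Proof.
  intros HU HV hl.
  set (A := mmul n (adj U) V).
  set (T := fun i j => Cmul (RtoC (sqrt (lam i))) (A i j)).
  assert (HT : meq n (mmul n T (adj T)) (diagm lam)).
  { intros i k hi hk.
    transitivity (Cmul (RtoC (sqrt (lam i) * sqrt (lam k))) (mmul n A (adj A) i k)).
    { unfold mmul, adj, T. rewrite <- csum_mul_l. apply csum_ext; intros; cring. }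
    rewrite (unitary_prod_adj n U V HU HV) by auto.
    unfold idm, diagm. destruct (Nat.eqb_spec i k). subst. rewrite sqrt_sqrt by auto. cring. cring. }
  pose proof (schur n n T lam HT).
  replace (rsum n (fun j => hh (rsum n (fun l => lam l * nrm (A l j))))) with (rsum n (fun j => hh (rsum n (fun i => nrm (T i j))))); auto.
  apply rsum_ext; intros j hj. f_equal.
  apply rsum_ext; intros i hi. unfold T. rewrite nrm_mul, nrm_RtoC, sqrt_sqrt by auto. reflexivity.
Qed.

Lemma decomp_meq n rho rho' U lam : decomp n rho U lam -> meq n rho rho' -> decomp n rho' U lam.
Proof. intros [HU HD] E. split; auto. exact (req_trans (req_sym E) HD). Qed.
Lemma good_meq n rho rho' : good n rho -> meq n rho rho' -> good n rho'.
Proof. intros [U [l [H hl]]] E. exists U, l. split; auto. eapply decomp_meq; eauto. Qed.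

Lemma herm_decomp n rho U lam : decomp n rho U lam -> herm n rho.
Proof.
  intros [_ HD] i j hi hj. rewrite HD, HD by auto.
  change (Cconj (mmul n (mmul n U (diagm lam)) (adj U) j i)) with (adj (mmul n (mmul n U (diagm lam)) (adj U)) i j).
  rewrite (adj_mmulM n (mmul n U (diagm lam))), adj_adjM, adj_mmulM, adj_diagm, !mmul_assocM.
  reflexivity.
Qed.

Lemma unitary_conj n rho U lam V : decomp n rho U lam -> unitary n V ->
  decomp n (mmul n (mmul n V rho) (adj V)) (mmul n V U) lam.
Proof.
  intros [[U1 U2] HD] [V1 V2]. split; [split|].
  - rewrite adj_mmulM, mmul_assocM, <- (mmul_assocM n n U).
    apply (req_trans (mmul_req (req_refl _ _ _) (mmul_req U1 (req_refl _ _ _)))).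
    apply (req_trans (mmul_req (req_refl _ _ _) (idm_l_req _ _ _))). auto.
  - rewrite adj_mmulM, mmul_assocM, <- (mmul_assocM n n (adj V)).
    apply (req_trans (mmul_req (req_refl _ _ _) (mmul_req V2 (req_refl _ _ _)))).
    apply (req_trans (mmul_req (req_refl _ _ _) (idm_l_req _ _ _))). auto.
  - apply (req_trans (mmul_req (mmul_req (req_refl _ _ _) HD) (req_refl _ _ _))).
    rewrite adj_mmulM, !mmul_assocM. apply req_refl.
Qed.

Lemma good_conj n rho V : good n rho -> unitary n V -> good n (mmul n (mmul n V rho) (adj V)).
Proof. intros [U [l [H hl]]] HV. exists (mmul n V U), l. split; auto. apply unitary_conj; auto. Qed.

Lemma ent_conj n rho V : good n rho -> unitary n V ->
  vN_entropy n (mmul n (mmul n V rho) (adj V)) = vN_entropy n rho.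
Proof.
  intros G HV. pose proof (good_conj n rho V G HV) as G'. destruct G as [U [l [H hl]]].
  rewrite (ent_spec n rho U l), (ent_spec _ _ (mmul n V U) l); auto.
  apply unitary_conj; auto. exists U, l; auto.
Qed.

Lemma trace_decomp n rho U lam : decomp n rho U lam -> mtrace n rho = RtoC (rsum n lam).
Proof.
  intros [[U1 U2] HD]. unfold mtrace. rewrite (csum_ext _ _ (fun i => mmul n (mmul n U (diagm lam)) (adj U) i i)) by (intros; apply HD; auto).
  unfold mmul at 1. rewrite (csum_ext _ _ (fun i => csum n (fun l => Cmul (RtoC (lam l)) (Cmul (Cconj (U i l)) (U i l))))).
  2:{ intros i hi. apply csum_ext; intros l hl. rewrite mmul_diag_r by auto. unfold adj; cring. }
  rewrite csum_swap, <- csum_RtoC. apply csum_ext; intros l hl. rewrite csum_mul_l.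
  change (csum n (fun i => Cmul (Cconj (U i l)) (U i l))) with (mmul n (adj U) U l l).
  rewrite U2 by auto. unfold idm. rewrite Nat.eqb_refl. cring.
Qed.

Lemma density_good n rho : density n rho -> good n rho.
Proof.
  intros [Hh [Hp Ht]]. destruct (Spec.spectral_raw n rho Hh) as [U [l [HU HD]]].
  exists U, l. split. split; auto. intros j hj.
  pose proof (decomp_diag n rho U l j (conj HU HD) hj).
  specialize (Hp (fun i => U i j)); cbv beta in Hp.
  replace (csum n (fun i => csum n (fun k => Cmul (Cconj (U i j)) (Cmul (rho i k) (U k j)))))
    with (mmul n (adj U) (mmul n rho U) j j) in Hp.
  rewrite H in Hp. exact Hp.
  unfold mmul at 1. apply csum_ext; intros i hi. unfold adj, mmul. rewrite <- csum_mul_l. reflexivity.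
Qed.

Lemma gram_good n r rho Y : meq n rho (mmul r Y (adj Y)) -> good n rho.
Proof.
  intros E.
  assert (Hh : herm n rho).
  { intros i j hi hj. rewrite E, E by auto. unfold mmul, adj. rewrite csum_conj.
    apply csum_ext; intros; cring. }
  destruct (Spec.spectral_raw n rho Hh) as [U [l [HU HD]]].
  exists U, l. split. split; auto. intros j hj.
  pose proof (decomp_diag n rho U l j (conj HU HD) hj).
  rewrite (mmul_req (req_refl _ _ _) (mmul_req E (req_refl _ _ _))) in H by auto.
  assert (EQ : mmul n (adj U) (mmul n (mmul r Y (adj Y)) U) = mmul r (mmul n (adj U) Y) (adj (mmul n (adj U) Y)))
    by (rewrite adj_mmulM, adj_adjM, !mmul_assocM; reflexivity).
  rewrite EQ in H. unfold mmul at 1 in H.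
  rewrite (csum_ext _ _ (fun k => RtoC (nrm (mmul n (adj U) Y j k)))) in H.
  2:{ intros k hk. unfold adj at 1. apply Cmul_conj_r. }
  rewrite csum_RtoC in H. injection H; intros <-. apply rsum_ge0; intros; apply nrm_ge0.
Qed.

Definition mixM (K : nat) (p : nat -> R) (tau : nat -> Mat) : Mat :=
  fun i j => csum K (fun x => Cmul (RtoC (p x)) (tau x i j)).

Lemma mmul_mix_l n K p tau V : mmul n (mixM K p tau) V = mixM K p (fun x => mmul n (tau x) V).
Proof.
  do 2 (apply functional_extensionality; intro). unfold mmul, mixM.
  rewrite (csum_ext _ _ (fun k => csum K (fun y => Cmul (RtoC (p y)) (Cmul (tau y x k) (V k x0))))).
  rewrite csum_swap. apply csum_ext; intros. apply csum_mul_l.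
  intros. rewrite <- csum_mul_r. apply csum_ext; intros; cring.
Qed.
Lemma mmul_mix_r n K p tau A : mmul n A (mixM K p tau) = mixM K p (fun x => mmul n A (tau x)).
Proof.
  do 2 (apply functional_extensionality; intro). unfold mmul, mixM.
  rewrite (csum_ext _ _ (fun k => csum K (fun y => Cmul (RtoC (p y)) (Cmul (A x k) (tau y k x0))))).
  rewrite csum_swap. apply csum_ext; intros. apply csum_mul_l.
  intros. rewrite <- csum_mul_l. apply csum_ext; intros; cring.
Qed.

Lemma herm_mix n K p tau : (forall x, (x < K)%nat -> herm n (tau x)) -> herm n (mixM K p tau).
Proof.
  intros H i j hi hj. unfold mixM. rewrite csum_conj. apply csum_ext; intros x hx.
  rewrite (H x hx i j hi hj). cring.
Qed.

Lemma concavity n K p tau Us Ls :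
  (forall x, (x < K)%nat -> decomp n (tau x) (Us x) (Ls x) /\ forall i, (i < n)%nat -> 0 <= Ls x i) ->
  (forall x, (x < K)%nat -> 0 <= p x) -> rsum K p = 1 ->
  good n (mixM K p tau) /\
  rsum K (fun x => p x * (- rsum n (fun i => hh (Ls x i)))) <= vN_entropy n (mixM K p tau).
Proof.
  intros HT hp hs.
  assert (Hh : herm n (mixM K p tau)) by (apply herm_mix; intros x hx; eapply herm_decomp; apply HT; auto).
  destruct (Spec.spectral_raw n _ Hh) as [V [mu [HV HD]]].
  set (d := fun x j => rsum n (fun l => Ls x l * nrm (mmul n (adj (Us x)) V l j))).
  assert (hd : forall x j, (x < K)%nat -> 0 <= d x j).
  { intros. apply rsum_ge0; intros. apply Rmult_le_pos. apply HT; auto. apply nrm_ge0. }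
  assert (Hmu : forall j, (j < n)%nat -> mu j = rsum K (fun x => p x * d x j)).
  { intros j hj. pose proof (decomp_diag n _ V mu j (conj HV HD) hj).
    rewrite mmul_mix_l, mmul_mix_r in H. unfold mixM in H.
    rewrite (csum_ext _ _ (fun x => RtoC (p x * d x j))) in H.
    rewrite csum_RtoC in H. injection H; auto.
    intros x hx. unfold d. rewrite (diag_form n n (tau x) (Us x) (Ls x) V j) by (auto; apply HT; auto).
    rewrite RtoC_mul. reflexivity. }
  assert (hmu : forall j, (j < n)%nat -> 0 <= mu j).
  { intros. rewrite Hmu by auto. apply rsum_ge0; intros; apply Rmult_le_pos; auto. }
  assert (G : good n (mixM K p tau)) by (exists V, mu; split; [split|]; auto).
  split; auto.
  rewrite (ent_spec n _ V mu G (conj HV HD)).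
  assert (rsum n (fun j => hh (mu j)) <= rsum n (fun j => rsum K (fun x => p x * hh (d x j)))).
  { apply rsum_le; intros j hj. rewrite Hmu by auto. apply jensen; auto. lra. }
  rewrite rsum_swap in H.
  assert (rsum K (fun x => rsum n (fun j => p x * hh (d x j))) <= rsum K (fun x => p x * rsum n (fun i => hh (Ls x i)))).
  { apply rsum_le; intros x hx. rewrite rsum_mul_l. apply Rmult_le_compat_l; auto.
    apply schur_unitary. apply HT; auto. auto. apply HT; auto. }
  rewrite (rsum_ext K _ (fun x => - (p x * rsum n (fun i => hh (Ls x i))))) by (intros; ring).
  rewrite rsum_opp. lra.
Qed.

Lemma dm1 z k n : (k < n)%nat -> ((z * n + k) / n = z)%nat.
Proof. intros. symmetry. apply (Nat.div_unique _ _ _ k); lia. Qed.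
Lemma dm2 z k n : (k < n)%nat -> ((z * n + k) mod n = k)%nat.
Proof. intros. symmetry. apply (Nat.mod_unique _ _ z); lia. Qed.
Lemma dm_lt i d n : (i < d * n)%nat -> (i / n < d)%nat.
Proof. intros. apply Nat.Div0.div_lt_upper_bound. lia. Qed.
Lemma dm_mod i n : (0 < n)%nat -> (i mod n < n)%nat.
Proof. intros. apply Nat.mod_upper_bound. lia. Qed.
Lemma dm_eq i n : (i = (i / n) * n + i mod n)%nat.
Proof. pose proof (Nat.Div0.div_mod i n). lia. Qed.
Lemma dm_inj i j n : (i / n = j / n)%nat -> (i mod n = j mod n)%nat -> i = j.
Proof. intros. rewrite (dm_eq i n), (dm_eq j n). lia. Qed.

Definition Bk (n : nat) (M : nat -> Mat) : Mat :=
  fun i j => if Nat.eqb (i / n) (j / n) then M (i / n)%nat (i mod n)%nat (j mod n)%nat else C0.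

Lemma Bk_mmul d n M N : (0 < n)%nat ->
  req (d * n) (d * n) (mmul (d * n) (Bk n M) (Bk n N)) (Bk n (fun z => mmul n (M z) (N z))).
Proof.
  intros hn i j hi hj. unfold mmul at 1. rewrite csum_split.
  transitivity (csum d (fun z => if Nat.eqb z (i / n) then
     (if Nat.eqb (i / n) (j / n) then mmul n (M (i / n)%nat) (N (i / n)%nat) (i mod n)%nat (j mod n)%nat else C0) else C0)).
  - apply csum_ext; intros z hz.
    transitivity (csum n (fun k => if Nat.eqb (i / n) z then (if Nat.eqb z (j / n) then
        Cmul (M z (i mod n)%nat k) (N z k (j mod n)%nat) else C0) else C0)).
    { apply csum_ext; intros k hk. unfold Bk. rewrite !dm1, !dm2 by auto.
      destruct (Nat.eqb_spec (i / n) z), (Nat.eqb_spec z (j / n)); try cring.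
      rewrite e. reflexivity. }
    destruct (Nat.eqb_spec z (i / n)).
    + subst. rewrite Nat.eqb_refl. destruct (Nat.eqb_spec (i / n) (j / n)).
      * reflexivity.
      * apply csum_zero; intros k hk. reflexivity.
    + apply csum_zero; intros k hk.
      destruct (Nat.eqb_spec (i / n) z); [lia|]. reflexivity.
  - rewrite csum_delta by (apply dm_lt; auto). unfold Bk. reflexivity.
Qed.

Lemma Bk_adj n M : adj (Bk n M) = Bk n (fun z => adj (M z)).
Proof.
  do 2 (apply functional_extensionality; intro). unfold adj, Bk.
  destruct (Nat.eqb_spec (x0 / n) (x / n)), (Nat.eqb_spec (x / n) (x0 / n)); try lia.
  rewrite e. reflexivity. cring.
Qed.

Lemma Bk_idm n : (0 < n)%nat -> Bk n (fun _ => idm) = idm.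
Proof.
  intros hn. do 2 (apply functional_extensionality; intro). unfold Bk, idm.
  destruct (Nat.eqb_spec (x / n) (x0 / n)) as [e1|e1], (Nat.eqb_spec (x mod n) (x0 mod n)) as [e2|e2],
    (Nat.eqb_spec x x0) as [e3|e3]; try reflexivity; exfalso;
    first [ apply e3; eapply dm_inj; eauto | subst; tauto ].
Qed.

Lemma Bk_diag n (lam : nat -> nat -> R) : (0 < n)%nat ->
  Bk n (fun z => diagm (lam z)) = diagm (fun i => lam (i / n)%nat (i mod n)%nat).
Proof.
  intros hn. do 2 (apply functional_extensionality; intro). unfold Bk, diagm.
  destruct (Nat.eqb_spec (x / n) (x0 / n)) as [e1|e1], (Nat.eqb_spec (x mod n) (x0 mod n)) as [e2|e2],
    (Nat.eqb_spec x x0) as [e3|e3]; try reflexivity; exfalso;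
    first [ apply e3; eapply dm_inj; eauto | subst; tauto ].
Qed.

Lemma Bk_meq d n M N : (0 < n)%nat -> (forall z, (z < d)%nat -> meq n (M z) (N z)) ->
  meq (d * n) (Bk n M) (Bk n N).
Proof.
  intros hn H i j hi hj. unfold Bk. destruct (Nat.eqb_spec (i / n) (j / n)); auto.
  apply H; try apply dm_mod; auto. apply dm_lt; auto.
Qed.

Lemma cq_Bk n P W : cq_state n P W = Bk n (fun z => fun a b => Cmul (RtoC (P z)) (W z a b)).
Proof. reflexivity. Qed.

Lemma unitary_Bk d n U : (0 < n)%nat -> (forall z, (z < d)%nat -> unitary n (U z)) -> unitary (d * n) (Bk n U).
Proof.
  intros hn HU. split.
  - rewrite Bk_adj. apply (req_trans (Bk_mmul d n _ _ hn)). rewrite <- (Bk_idm n hn).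
    apply Bk_meq; auto. intros z hz; apply HU; auto.
  - rewrite Bk_adj. apply (req_trans (Bk_mmul d n _ _ hn)). rewrite <- (Bk_idm n hn).
    apply Bk_meq; auto. intros z hz; apply HU; auto.
Qed.

Lemma cq_decomp d n P W Us Ls : (0 < n)%nat ->
  (forall z, (z < d)%nat -> decomp n (W z) (Us z) (Ls z)) ->
  decomp (d * n) (cq_state n P W) (Bk n Us) (fun i => P (i / n)%nat * Ls (i / n)%nat (i mod n)%nat).
Proof.
  intros hn HD. split.
  - apply unitary_Bk; auto. intros z hz; apply HD; auto.
  - rewrite cq_Bk, <- (Bk_diag n (fun z k => P z * Ls z k) hn), Bk_adj.
    eapply req_trans; [|apply req_sym; apply (req_trans (mmul_req (Bk_mmul d n _ _ hn) (req_refl _ _ _)));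
      apply Bk_mmul; auto].
    apply Bk_meq; auto. intros z hz a b ha hb.
    destruct (HD z hz) as [_ E]. rewrite E by auto.
    unfold mmul at 1 3. rewrite <- csum_mul_l. apply csum_ext; intros k hk.
    rewrite !mmul_diag_r by auto. cring.
Qed.

Lemma hh_mul a b : 0 <= a -> 0 <= b -> hh (a * b) = b * hh a + a * hh b.
Proof.
  intros ha hb. unfold hh.
  destruct (Req_dec a 0) as [->|na]. ring.
  destruct (Req_dec b 0) as [->|nb]. ring.
  rewrite ln_mult by lra. ring.
Qed.

Lemma cq_entropy d n P W Us Ls : (0 < n)%nat -> prob d P ->
  (forall z, (z < d)%nat -> decomp n (W z) (Us z) (Ls z) /\ (forall k, (k < n)%nat -> 0 <= Ls z k) /\ rsum n (Ls z) = 1) ->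
  vN_entropy (d * n) (cq_state n P W) =
  shannon d P + rsum d (fun z => P z * (- rsum n (fun k => hh (Ls z k)))).
Proof.
  intros hn [hP hP1] HD.
  assert (D : decomp (d * n) (cq_state n P W) (Bk n Us) (fun i => P (i / n)%nat * Ls (i / n)%nat (i mod n)%nat))
    by (apply cq_decomp; auto; intros; apply HD; auto).
  assert (G : good (d * n) (cq_state n P W)).
  { exists (Bk n Us), (fun i => P (i / n)%nat * Ls (i / n)%nat (i mod n)%nat). split; auto.
    intros i hi. apply Rmult_le_pos. apply hP. apply dm_lt; auto. apply HD. apply dm_lt; auto. apply dm_mod; auto. }
  rewrite (ent_spec _ _ _ _ G D), rsum_split. unfold shannon.
  transitivity (rsum d (fun z => - (P z * ln (P z)) + P z * - rsum n (fun k => hh (Ls z k)))).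
  2:{ rewrite rsum_add, rsum_opp. reflexivity. }
  rewrite <- rsum_opp. apply rsum_ext; intros z hz.
  rewrite (rsum_ext _ _ (fun k => Ls z k * hh (P z) + P z * hh (Ls z k))).
  2:{ intros k hk. rewrite dm1, dm2 by auto. apply hh_mul. apply hP; auto. apply HD; auto. }
  rewrite rsum_add, rsum_mul_r, rsum_mul_l. destruct (HD z hz) as [_ [_ ->]]. unfold hh. ring.
Qed.

Lemma ent_meq n rho rho' : good n rho -> meq n rho rho' -> vN_entropy n rho' = vN_entropy n rho.
Proof.
  intros G E. pose proof (good_meq _ _ _ G E) as G'. pose proof G as G0. destruct G0 as [U [l [D hl]]].
  rewrite (ent_spec n rho U l G D), (ent_spec n rho' U l G' (decomp_meq _ _ _ _ _ D E)). reflexivity.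
Qed.

Definition dfam (d n : nat) (W : nat -> Mat) (Us : nat -> Mat) (Ls : nat -> nat -> R) : Prop :=
  forall z, (z < d)%nat -> decomp n (W z) (Us z) (Ls z) /\ (forall k, (k < n)%nat -> 0 <= Ls z k) /\ rsum n (Ls z) = 1.

Lemma ptr1_cq d n P W : meq n (ptr1 d n (cq_state n P W)) (mixM d P W).
Proof.
  intros i j hi hj. unfold ptr1, mixM, cq_state. apply csum_ext; intros k hk.
  rewrite !dm1, !dm2, Nat.eqb_refl by auto. reflexivity.
Qed.

Lemma mix_good d n P W Us Ls : prob d P -> dfam d n W Us Ls -> good n (mixM d P W).
Proof.
  intros [hP hP1] HF. apply (proj1 (concavity n d P W Us Ls ltac:(intros; split; apply HF; auto) hP hP1)).
Qed.

Lemma ent_W d n W Us Ls z : dfam d n W Us Ls -> (z < d)%nat -> vN_entropy n (W z) = - rsum n (fun k => hh (Ls z k)).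
Proof.
  intros HF hz. destruct (HF z hz) as [D [hl _]]. apply (ent_spec n (W z) (Us z) (Ls z)); auto. exists (Us z), (Ls z); auto.
Qed.

Lemma holevo_formula d n W P Us Ls : (0 < n)%nat -> prob d P -> dfam d n W Us Ls ->
  shannon d P - cond_entropy d n W P = vN_entropy n (mixM d P W) - rsum d (fun z => P z * vN_entropy n (W z)).
Proof.
  intros hn HP HF. unfold cond_entropy.
  rewrite (cq_entropy d n P W Us Ls hn HP HF).
  rewrite (ent_meq n (mixM d P W) (ptr1 d n (cq_state n P W))).
  2:{ eapply mix_good; eauto. }
  2:{ apply req_sym, ptr1_cq. }
  rewrite (rsum_ext d (fun z => P z * vN_entropy n (W z)) (fun z => P z * - rsum n (fun k => hh (Ls z k)))).
  unfold shannon.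
  ring. intros z hz. rewrite (ent_W d n W Us Ls z HF hz). reflexivity.
Qed.

Definition unif (d : nat) : nat -> R := fun _ => / INR d.
Lemma prob_unif d : (0 < d)%nat -> prob d (unif d).
Proof.
  intros hd. assert (0 < INR d) by (apply lt_0_INR; auto). split.
  intros; unfold unif; left; apply Rinv_0_lt_compat; auto.
  unfold unif. rewrite rsum_const. field. lra.
Qed.

Lemma holevo_ub d n W Us Ls V Wbar s0 P : (0 < d)%nat -> dfam d n W Us Ls ->
  (forall x, (x < d)%nat -> unitary n (V x)) ->
  (forall z, (z < d)%nat -> meq n (mixM d (unif d) (fun x => mmul n (mmul n (V x) (W z)) (adj (V x)))) Wbar) ->
  (forall z, (z < d)%nat -> vN_entropy n (W z) = s0) ->
  prob d P ->
  vN_entropy n (mixM d P W) - rsum d (fun z => P z * vN_entropy n (W z)) <= vN_entropy n Wbar - s0.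
Proof.
  intros hd HF HV HW Hs HP.
  rewrite (rsum_ext d _ (fun z => P z * s0)) by (intros; rewrite Hs; auto).
  rewrite rsum_mul_r, (proj2 HP), Rmult_1_l.
  destruct (mix_good d n P W Us Ls HP HF) as [Um [Lm [Dm hLm]]].
  set (mix := mixM d P W) in *.
  set (tau := fun x => mmul n (mmul n (V x) mix) (adj (V x))).
  destruct (prob_unif d hd) as [hu hu1].
  destruct (concavity n d (unif d) tau (fun x => mmul n (V x) Um) (fun _ => Lm)) as [Gs Cs]; auto.
  { intros x hx. split; auto. apply unitary_conj; auto. }
  assert (Es : meq n (mixM d (unif d) tau) Wbar).
  { intros i j hi hj.
    transitivity (mixM d P (fun _ => Wbar) i j).
    - unfold tau, mix. unfold mixM at 1.
      rewrite (csum_ext _ _ (fun x => csum d (fun z => Cmul (RtoC (P z)) (Cmul (RtoC (unif d x))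
           (mmul n (mmul n (V x) (W z)) (adj (V x)) i j))))).
      2:{ intros x hx. rewrite mmul_mix_r, mmul_mix_l. unfold mixM. rewrite <- csum_mul_l. apply csum_ext; intros. cring. }
      rewrite csum_swap. apply csum_ext; intros z hz. rewrite csum_mul_l. f_equal.
      rewrite <- (HW z hz i j hi hj). reflexivity.
    - unfold mixM. rewrite csum_mul_r. rewrite csum_RtoC, (proj2 HP). cring. }
  rewrite (ent_meq n (mixM d (unif d) tau) Wbar Gs Es).
  assert (vN_entropy n mix = - rsum n (fun i => hh (Lm i))) by (apply (ent_spec n mix Um Lm); auto; exists Um, Lm; auto).
  rewrite rsum_mul_r, hu1, Rmult_1_l in Cs. lra.
Qed.

Lemma holevo_lub d n W Us Ls V Wbar s0 : (0 < d)%nat -> (0 < n)%nat -> dfam d n W Us Ls ->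
  (forall x, (x < d)%nat -> unitary n (V x)) ->
  (forall z, (z < d)%nat -> meq n (mixM d (unif d) (fun x => mmul n (mmul n (V x) (W z)) (adj (V x)))) Wbar) ->
  (forall z, (z < d)%nat -> vN_entropy n (W z) = s0) ->
  meq n (mixM d (unif d) W) Wbar ->
  is_lub (holevo_values d n W) (vN_entropy n Wbar - s0).
Proof.
  intros hd hn HF HV HW Hs Hu. split.
  - intros r [P [HP ->]]. rewrite (holevo_formula d n W P Us Ls hn HP HF).
    eapply holevo_ub; eauto.
  - intros b Hb. apply Hb. exists (unif d). split. apply prob_unif; auto.
    rewrite (holevo_formula d n W (unif d) Us Ls hn (prob_unif d hd) HF).
    rewrite (rsum_ext d _ (fun z => unif d z * s0)) by (intros; rewrite Hs; auto).
    rewrite rsum_mul_r, (proj2 (prob_unif d hd)), Rmult_1_l.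
    rewrite (ent_meq n (mixM d (unif d) W) Wbar); auto.
    eapply mix_good; eauto. apply prob_unif; auto.
Qed.

Definition conjM (A : Mat) : Mat := fun i j => Cconj (A i j).
Definition trM (A : Mat) : Mat := fun i j => A j i.

Lemma conjM_mmul p A B : conjM (mmul p A B) = mmul p (conjM A) (conjM B).
Proof.
  do 2 (apply functional_extensionality; intro). unfold conjM, mmul. rewrite csum_conj.
  apply csum_ext; intros. apply Cconj_mul.
Qed.
Lemma conjM_adj A : conjM (adj A) = adj (conjM A).
Proof. reflexivity. Qed.
Lemma conjM_diag l : conjM (diagm l) = diagm l.
Proof.
  do 2 (apply functional_extensionality; intro). unfold conjM, diagm. destruct (Nat.eqb _ _); cring.
Qed.
Lemma conjM_idm : conjM idm = idm.
Proof.
  do 2 (apply functional_extensionality; intro). unfold conjM, idm. destruct (Nat.eqb _ _); cring.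
Qed.
Lemma conjM_req r c A B : req r c A B -> req r c (conjM A) (conjM B).
Proof. intros H i j hi hj. unfold conjM. rewrite H; auto. Qed.
Lemma unitary_conjM n V : unitary n V -> unitary n (conjM V).
Proof.
  intros [V1 V2]. split.
  - rewrite <- conjM_adj, <- conjM_mmul, <- conjM_idm. apply conjM_req; auto.
  - rewrite <- conjM_adj, <- conjM_mmul, <- conjM_idm. apply conjM_req; auto.
Qed.

Lemma decomp_full n rho U lam : decomp n rho U lam ->
  meq n (mmul n (adj U) (mmul n rho U)) (diagm lam).
Proof.
  intros [[U1 U2] HD].
  apply (req_trans (mmul_req (req_refl _ _ _) (mmul_req HD (req_refl _ _ _)))).
  rewrite !mmul_assocM, <- (mmul_assocM n n (adj U) U).
  apply (req_trans (mmul_req U2 (mmul_req (req_refl _ _ _) U2))).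
  apply (req_trans (idm_l_req _ _ _)). apply idm_r_req.
Qed.

Lemma schmidt a b X :
  vN_entropy a (mmul b X (adj X)) = vN_entropy b (mmul a (trM X) (adj (trM X))).
Proof.
  pose proof (gram_good a b _ X (req_refl _ _ _)) as GA.
  pose proof (gram_good b a _ (trM X) (req_refl _ _ _)) as GB.
  pose proof GA as GA0; destruct GA0 as [U [al [DA hal]]]. pose proof GB as GB0; destruct GB0 as [V [be [DB hbe]]].
  rewrite (ent_spec _ _ _ _ GA DA), (ent_spec _ _ _ _ GB DB). f_equal.
  set (Wc := conjM V).
  assert (HW : unitary b Wc) by (apply unitary_conjM, DB).
  set (T := mmul b (mmul a (adj U) X) Wc).
  assert (EX : mmul a (adj X) X = conjM (mmul a (trM X) (adj (trM X)))).
  { do 2 (apply functional_extensionality; intro). unfold conjM, mmul, adj, trM. rewrite csum_conj.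
    apply csum_ext; intros; cring. }
  assert (H1 : meq a (mmul b T (adj T)) (diagm al)).
  { unfold T. rewrite !adj_mmulM, adj_adjM.
    rewrite !mmul_assocM, <- (mmul_assocM b b Wc).
    apply (req_trans (mmul_req (req_refl _ _ _) (mmul_req (req_refl _ _ _) (mmul_req (proj1 HW) (req_refl _ _ _))))).
    apply (req_trans (mmul_req (req_refl _ _ _) (mmul_req (req_refl _ _ _) (idm_l_req _ _ _)))).
    rewrite <- (mmul_assocM b a X). apply decomp_full; auto. }
  assert (H2 : meq b (mmul a (adj T) T) (diagm be)).
  { unfold T. rewrite !adj_mmulM, adj_adjM.
    rewrite !mmul_assocM, <- (mmul_assocM a a U).
    apply (req_trans (mmul_req (req_refl _ _ _) (mmul_req (req_refl _ _ _) (mmul_req (proj1 (proj1 DA)) (req_refl _ _ _))))).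
    apply (req_trans (mmul_req (req_refl _ _ _) (mmul_req (req_refl _ _ _) (idm_l_req _ _ _)))).
    rewrite <- (mmul_assocM a b (adj X) X Wc), EX.
    pose proof (decomp_full b _ _ _ DB) as F.
    apply conjM_req in F. rewrite conjM_mmul, conjM_mmul, conjM_diag in F. exact F. }
  assert (C1 : forall j, (j < b)%nat -> rsum a (fun i => nrm (T i j)) = be j).
  { intros j hj. pose proof (H2 j j hj hj). unfold diagm in H. rewrite Nat.eqb_refl in H.
    unfold mmul at 1, adj at 1 in H. rewrite (csum_ext _ _ (fun i => RtoC (nrm (T i j)))) in H
      by (intros; apply Cmul_conj_l).
    rewrite csum_RtoC in H. injection H; auto. }
  assert (C2 : forall i, (i < a)%nat -> rsum b (fun j => nrm (adj T j i)) = al i).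
  { intros i hi. pose proof (H1 i i hi hi). unfold diagm in H. rewrite Nat.eqb_refl in H.
    unfold mmul at 1, adj at 1 in H. rewrite (csum_ext _ _ (fun j => RtoC (nrm (adj T j i)))) in H
      by (intros; unfold adj; rewrite nrm_conj; apply Cmul_conj_r).
    rewrite csum_RtoC in H. injection H; auto. }
  apply Rle_antisym.
  - pose proof (schur b a (adj T) be) as S2.
    rewrite adj_adjM in S2. specialize (S2 H2).
    rewrite (rsum_ext a _ (fun i => hh (al i))) in S2 by (intros; rewrite C2; auto). exact S2.
  - pose proof (schur a b T al H1) as S1.
    rewrite (rsum_ext b _ (fun j => hh (be j))) in S1 by (intros; rewrite C1; auto). exact S1.
Qed.

Lemma trace_meq n A B : meq n A B -> mtrace n A = mtrace n B.
Proof. intros H. unfold mtrace. apply csum_ext; intros. apply H; auto. Qed.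

Lemma gram_trace a b X : mtrace a (mmul b X (adj X)) = mtrace b (mmul a (trM X) (adj (trM X))).
Proof.
  unfold mtrace, mmul, adj, trM. rewrite csum_swap. reflexivity.
Qed.

Lemma csum_rot1 n f : (0 < n)%nat -> csum n (fun x => f ((S x) mod n)%nat) = csum n f.
Proof.
  intros hn. destruct n as [|n]; [lia|].
  change (csum (S n) (fun x => f (S x mod S n)%nat)) with (Cadd (csum n (fun x => f (S x mod S n)%nat)) (f (S n mod S n)%nat)).
  rewrite (csum_ext n _ (fun k => f (S k))).
  2:{ intros k hk. rewrite Nat.mod_small by lia. reflexivity. }
  rewrite Nat.Div0.mod_same. rewrite (csum_S_l n f). cring.
Qed.
Lemma csum_rot n z f : (0 < n)%nat -> csum n (fun x => f ((z + x) mod n)%nat) = csum n f.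
Proof.
  intros hn. induction z.
  - apply csum_ext; intros. rewrite Nat.mod_small by lia. reflexivity.
  - rewrite <- IHz. rewrite <- (csum_rot1 n (fun y => f ((z + y) mod n)%nat) hn).
    apply csum_ext; intros x hx. f_equal.
    rewrite Nat.Div0.add_mod_idemp_r. f_equal. lia.
Qed.

Lemma Cexpi_add a b : Cmul (Cexpi a) (Cexpi b) = Cexpi (a + b).
Proof. apply Ceq; cunf; [rewrite cos_plus|rewrite sin_plus]; ring. Qed.
Lemma Cexpi_0 : Cexpi 0 = C1.
Proof. apply Ceq; cunf; [rewrite cos_0|rewrite sin_0]; ring. Qed.
Lemma Cexpi_conj a : Cconj (Cexpi a) = Cexpi (- a).
Proof. apply Ceq; cunf; [rewrite cos_neg|rewrite sin_neg]; ring. Qed.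
Lemma nrm_Cexpi a : nrm (Cexpi a) = 1.
Proof. unfold nrm; cunf. pose proof (sin2_cos2 a). unfold Rsqr in H. lra. Qed.
Lemma cos_2PI_nat c : cos (2 * PI * INR c) = 1.
Proof. rewrite <- cos_0, <- (cos_period 0 c). f_equal; ring. Qed.
Lemma sin_2PI_nat c : sin (2 * PI * INR c) = 0.
Proof. rewrite <- sin_0, <- (sin_period 0 c). f_equal; ring. Qed.

Lemma geo_sum th N : Cmul (csum N (fun x => Cexpi (INR x * th))) (Cadd (Cexpi th) (RtoC (-1))) =
  Cadd (Cexpi (INR N * th)) (RtoC (-1)).
Proof.
  induction N.
  - simpl. replace (0 * th) with 0 by ring. rewrite Cexpi_0. cring.
  - simpl csum. rewrite Cmul_add_l, IHN. rewrite S_INR.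
    replace ((INR N + 1) * th) with (INR N * th + th) by ring. rewrite <- Cexpi_add.
    cring.
Qed.

Lemma root_sum d c c' z : (0 < d)%nat -> (c < d)%nat -> (c' < d)%nat -> c <> c' ->
  csum d (fun x => Cexpi (2 * PI * INR (z + x) * (INR c - INR c') / INR d)) = C0.
Proof.
  intros hd hc hc' hne.
  assert (hD : 0 < INR d) by (apply lt_0_INR; auto).
  set (th := 2 * PI * (INR c - INR c') / INR d).
  rewrite (csum_ext _ _ (fun x => Cmul (Cexpi (INR z * th)) (Cexpi (INR x * th)))).
  2:{ intros x hx. rewrite Cexpi_add, plus_INR. f_equal. unfold th. field. lra. }
  rewrite csum_mul_l.
  set (S := csum d (fun x => Cexpi (INR x * th))).
  assert (HS : Cmul S (Cadd (Cexpi th) (RtoC (-1))) = C0).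
  { unfold S. rewrite geo_sum. replace (INR d * th) with (2 * PI * INR c - 2 * PI * INR c') by (unfold th; field; lra).
    apply Ceq; cunf. rewrite cos_minus, !cos_2PI_nat, !sin_2PI_nat. ring.
    rewrite sin_minus, !cos_2PI_nat, !sin_2PI_nat. ring. }
  assert (Hw : (cos th - 1) * (cos th - 1) + sin th * sin th > 0).
  { assert (hs : sin (th / 2) <> 0).
    { set (u := th / 2).
      assert (hu : u = PI * (INR c - INR c') / INR d) by (unfold u, th; field; lra).
      assert (INR c <> INR c') by (intro E; apply INR_eq in E; auto).
      assert (hcd : INR c < INR d) by (apply lt_INR; auto).
      assert (hcd' : INR c' < INR d) by (apply lt_INR; auto).
      assert (0 <= INR c) by apply pos_INR. assert (0 <= INR c') by apply pos_INR.
      pose proof PI_RGT_0.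
      destruct (Rlt_dec (INR c') (INR c)).
      - assert (H4 : 0 < u < PI).
        { rewrite hu. split. apply Rdiv_lt_0_compat; nra.
          apply Rmult_lt_reg_r with (INR d); auto. unfold Rdiv. rewrite Rmult_assoc, Rinv_l by lra. nra. }
        pose proof (sin_gt_0 u (proj1 H4) (proj2 H4)). lra.
      - assert (H4 : 0 < - u < PI).
        { rewrite hu. split. unfold Rdiv. replace (- (PI * (INR c - INR c') * / INR d)) with (PI * (INR c' - INR c) / INR d) by (field; lra). apply Rdiv_lt_0_compat; nra.
          apply Rmult_lt_reg_r with (INR d); auto. unfold Rdiv. replace (- (PI * (INR c - INR c') * / INR d) * INR d) with (PI * (INR c' - INR c)) by (field; lra). nra. }
        pose proof (sin_gt_0 (- u) (proj1 H4) (proj2 H4)) as H5. rewrite sin_neg in H5. lra. }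
    replace th with (2 * (th / 2)) by field. rewrite cos_2a_sin.
    assert (sin (th / 2) * sin (th / 2) > 0) by (pose proof (Rsqr_pos_lt _ hs); unfold Rsqr in *; lra).
    nra. }
  assert (S = C0).
  { destruct S as [s1 s2]. unfold Cmul, Cadd, Cexpi, RtoC, C0 in HS. simpl in HS. injection HS; intros h2 h1.
    assert (s1 * ((cos th - 1) * (cos th - 1) + sin th * sin th) = 0).
    { replace (s1 * ((cos th - 1) * (cos th - 1) + sin th * sin th)) with
        ((cos th - 1) * (s1 * (cos th + -1) - s2 * (sin th + 0)) + sin th * (s1 * (sin th + 0) + s2 * (cos th + -1))) by ring.
      rewrite h1, h2; ring. }
    assert (s2 * ((cos th - 1) * (cos th - 1) + sin th * sin th) = 0).
    { replace (s2 * ((cos th - 1) * (cos th - 1) + sin th * sin th)) with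
        (- sin th * (s1 * (cos th + -1) - s2 * (sin th + 0)) + (cos th - 1) * (s1 * (sin th + 0) + s2 * (cos th + -1))) by ring.
      rewrite h1, h2; ring. }
    apply Rmult_integral in H, H0. unfold C0. f_equal; lra. }
  rewrite H. cring.
Qed.

Lemma choose_fam d n F : (forall z, (z < d)%nat -> good n (F z) /\ mtrace n (F z) = C1) ->
  exists Us Ls, dfam d n F Us Ls.
Proof.
  intros H.
  set (P := fun z (p : Mat * (nat -> R)) => (z < d)%nat -> decomp n (F z) (fst p) (snd p) /\
      (forall k, (k < n)%nat -> 0 <= snd p k) /\ rsum n (snd p) = 1).
  set (g := fun z => epsilon (inhabits (idm, fun _ => 0)) (P z)).
  exists (fun z => fst (g z)), (fun z => snd (g z)). intros z hz.
  assert (E : exists p, P z p).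
  { destruct (H z hz) as [[U [l [D hl]]] T]. exists (U, l). intros _. simpl. split; auto. split; auto.
    rewrite (trace_decomp n (F z) U l D) in T. injection T; auto. }
  exact (epsilon_spec _ (P z) E hz).
Qed.

Lemma trace_pos n A : mtrace n A = C1 -> (0 < n)%nat.
Proof. destruct n. simpl. unfold C0, C1. intros H; injection H; lra. lia. Qed.

Lemma partA d n W : (0 < d)%nat -> cq_channel d n W -> symmetric_channel d n W ->
  is_lub (holevo_values d n W) (vN_entropy n (mixM d (unif d) W) - vN_entropy n (W O)).
Proof.
  intros hd HC [V [HV HS]].
  assert (hn : (0 < n)%nat) by (apply (trace_pos n (W O)), (HC O hd)).
  destruct (choose_fam d n W) as [Us [Ls HF]].
  { intros z hz. split. apply density_good, HC; auto. apply HC; auto. }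
  apply (holevo_lub d n W Us Ls V); auto.
  - intros z hz i j hi hj. unfold mixM.
    rewrite (csum_ext _ _ (fun x => (fun w => Cmul (RtoC (unif d w)) (W w i j)) ((z + x) mod d)%nat)).
    + exact (csum_rot d z (fun w => Cmul (RtoC (unif d w)) (W w i j)) hd).
    + intros x hx. simpl. rewrite HS by auto. reflexivity.
  - intros z hz. rewrite <- (ent_conj n (W O) (V z)) by (auto; apply density_good, HC; auto).
    apply ent_meq.
    + apply good_conj; auto. apply density_good, HC; auto.
    + pose proof (HS O z hd hz) as E. simpl in E. rewrite Nat.mod_small in E by auto. exact E.
  - apply req_refl.
Qed.

Section Dual.
Variables (d n m : nat) (phi : nat -> Vec).
Hypotheses (hd : (0 < d)%nat) (hm : (0 < m)%nat).

Definition ph (x c : nat) : C := Cexpi (2 * PI * INR x * INR c / INR d).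
Definition Yd (x : nat) : Mat := fun i k => theta d n m phi x (((i / m) * n + k) * m + i mod m)%nat.
Definition sd : R := / sqrt (INR d).

Lemma dual_Y x : dual_channel d n m phi x = mmul n (Yd x) (adj (Yd x)).
Proof. reflexivity. Qed.

Lemma theta_idx x i k : (k < n)%nat ->
  Yd x i k = Cmul (RtoC sd) (Cmul (ph x (i / m)) (phi (i / m)%nat (k * m + i mod m)%nat)).
Proof.
  intros hk. unfold Yd, theta. cbv zeta.
  assert (E : (((i / m) * n + k) * m + i mod m = (i / m) * (n * m) + (k * m + i mod m))%nat) by ring.
  assert (B : (k * m + i mod m < n * m)%nat).
  { pose proof (dm_mod i m hm). nia. }
  rewrite E, dm1, dm2 by auto. reflexivity.
Qed.

Lemma ph0 c : ph O c = C1.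
Proof. unfold ph. simpl INR. replace (2 * PI * 0 * INR c / INR d) with 0 by (unfold Rdiv; ring). apply Cexpi_0. Qed.

Lemma ph_add x z c : Cmul (ph x c) (ph z c) = ph (z + x) c.
Proof.
  unfold ph. rewrite Cexpi_add, plus_INR. f_equal. unfold Rdiv. ring.
Qed.
Lemma nrm_ph x c : nrm (ph x c) = 1. Proof. apply nrm_Cexpi. Qed.

Lemma Yd_ph x i k : (k < n)%nat -> Yd x i k = Cmul (ph x (i / m)) (Yd O i k).
Proof. intros hk. rewrite !theta_idx by auto. rewrite ph0. cring. Qed.

Definition Gd : Mat := dual_channel d n m phi O.

Lemma dual_ph x i j : dual_channel d n m phi x i j =
  Cmul (ph x (i / m)) (Cmul (Gd i j) (Cconj (ph x (j / m)))).
Proof.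
  unfold Gd. rewrite !dual_Y. unfold mmul, adj. rewrite <- csum_mul_r, <- csum_mul_l.
  apply csum_ext; intros k hk. rewrite (Yd_ph x i k), (Yd_ph x j k) by auto. cring.
Qed.

Definition Dph (x : nat) : Mat := fun i j => if Nat.eqb i j then ph x (i / m) else C0.

Lemma Dph_l N x A i j : (i < N)%nat -> mmul N (Dph x) A i j = Cmul (ph x (i / m)) (A i j).
Proof.
  intros hi. unfold mmul, Dph. rewrite <- (csum_delta' N i (fun k => Cmul (ph x (k / m)) (A k j))) by auto.
  apply csum_ext; intros k hk. destruct (Nat.eqb_spec i k); [subst; reflexivity|cring].
Qed.
Lemma Dph_r N x A i j : (j < N)%nat -> mmul N A (adj (Dph x)) i j = Cmul (A i j) (Cconj (ph x (j / m))).
Proof.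
  intros hj. unfold mmul, adj, Dph. rewrite <- (csum_delta N j (fun k => Cmul (A i k) (Cconj (ph x (k / m))))) by auto.
  apply csum_ext; intros k hk. destruct (Nat.eqb_spec j k), (Nat.eqb_spec k j); try lia; [subst; reflexivity|cring].
Qed.

Lemma Dph_unitary N x : unitary N (Dph x).
Proof.
  split; intros i j hi hj.
  - rewrite Dph_r by auto. unfold Dph, idm. destruct (Nat.eqb_spec i j).
    + subst. rewrite Cmul_conj_r, nrm_ph. reflexivity.
    + cring.
  - unfold mmul, adj, Dph, idm.
    rewrite <- (csum_delta N i (fun k => if Nat.eqb i j then C1 else C0)) by auto.
    apply csum_ext; intros k hk. destruct (Nat.eqb_spec k i), (Nat.eqb_spec k j), (Nat.eqb_spec i j); subst; try lia; try cring.
    rewrite Cmul_conj_l, nrm_ph. reflexivity.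
Qed.

Lemma conj_dual N x z : meq N (mmul N (mmul N (Dph x) (dual_channel d n m phi z)) (adj (Dph x)))
  (dual_channel d n m phi (z + x)).
Proof.
  intros i j hi hj. rewrite Dph_r, Dph_l by auto. rewrite !dual_ph.
  rewrite <- !ph_add, Cconj_mul. cring.
Qed.
End Dual.

Section Dual2.
Variables (d n m : nat) (phi : nat -> Vec) (W : nat -> Mat).
Hypotheses (hd : (0 < d)%nat) (hm : (0 < m)%nat).
Hypothesis HP : forall z, (z < d)%nat -> purification n m (W z) (phi z).

Definition Deph : Mat := cq_state m (unif d) (fun c => ptr1 n m (outer (phi c))).

Lemma sd_sq : sd d * sd d = / INR d.
Proof.
  assert (0 < INR d) by (apply lt_0_INR; auto). unfold sd.
  rewrite <- Rinv_mult, sqrt_sqrt by lra. reflexivity.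
Qed.

Lemma Gd_entry i j : Gd d n m phi i j = Cmul (RtoC (/ INR d))
  (csum n (fun k => Cmul (phi (i / m)%nat (k * m + i mod m)%nat) (Cconj (phi (j / m)%nat (k * m + j mod m)%nat)))).
Proof.
  unfold Gd. rewrite dual_Y. unfold mmul, adj. rewrite <- csum_mul_l. apply csum_ext; intros k hk.
  rewrite !theta_idx, !ph0, <- sd_sq by auto. cring.
Qed.

Lemma ph_pair y c c' : Cmul (ph d y c) (Cconj (ph d y c')) = Cexpi (2 * PI * INR y * (INR c - INR c') / INR d).
Proof. unfold ph. rewrite Cexpi_conj, Cexpi_add. f_equal. unfold Rdiv. ring. Qed.

Lemma HWd z : meq (d * m) (mixM d (unif d) (fun x => mmul (d * m) (mmul (d * m) (Dph d m x) (dual_channel d n m phi z)) (adj (Dph d m x)))) Deph.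
Proof.
  intros i j hi hj. unfold mixM.
  rewrite (csum_ext _ _ (fun x => Cmul (Cmul (RtoC (unif d x)) (Gd d n m phi i j))
      (Cexpi (2 * PI * INR (z + x) * (INR (i / m) - INR (j / m)) / INR d)))).
  2:{ intros x hx. rewrite (conj_dual d n m phi hd hm) by auto. rewrite dual_ph by auto.
      rewrite <- ph_pair. cring. }
  unfold Deph, cq_state. destruct (Nat.eqb_spec (i / m) (j / m)) as [e|e].
  - rewrite (csum_ext _ _ (fun x => Cmul (RtoC (unif d x)) (Gd d n m phi i j))).
    2:{ intros x hx. rewrite e. replace (2 * PI * INR (z + x) * (INR (j / m) - INR (j / m)) / INR d) with 0
          by (unfold Rdiv; ring). rewrite Cexpi_0. cring. }
    rewrite csum_mul_r, csum_RtoC, (proj2 (prob_unif d hd)), Cmul_1_l.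
    rewrite Gd_entry. unfold unif, ptr1, outer. rewrite e. reflexivity.
  - unfold unif. rewrite csum_mul_l, root_sum; auto. cring. apply dm_lt; auto. apply dm_lt; auto.
Qed.

Definition Xc (c : nat) : Mat := fun k e => phi c (k * m + e)%nat.
Lemma ptr2_X c : ptr2 n m (outer (phi c)) = mmul m (Xc c) (adj (Xc c)).
Proof. reflexivity. Qed.
Lemma ptr1_X c : ptr1 n m (outer (phi c)) = mmul n (trM (Xc c)) (adj (trM (Xc c))).
Proof. reflexivity. Qed.

Lemma reshuffle : meq n (mmul (d * m) (trM (Yd d n m phi O)) (adj (trM (Yd d n m phi O)))) (mixM d (unif d) W).
Proof.
  intros k l hk hl. unfold mmul at 1. rewrite csum_split. unfold mixM. apply csum_ext; intros c hc.
  rewrite <- (HP c hc k l hk hl), ptr2_X. unfold mmul, unif. rewrite <- csum_mul_l. apply csum_ext; intros e he.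
  unfold trM, adj, Xc. rewrite !theta_idx by auto. rewrite !dm1, !dm2, ph0, <- sd_sq by auto. cring.
Qed.
End Dual2.

Lemma symW d n W : (0 < d)%nat -> cq_channel d n W -> symmetric_channel d n W ->
  forall z, (z < d)%nat -> vN_entropy n (W z) = vN_entropy n (W O).
Proof.
  intros hd HC [V [HV HS]] z hz. rewrite <- (ent_conj n (W O) (V z)) by (auto; apply density_good, HC; auto).
  apply ent_meq.
  + apply good_conj; auto. apply density_good, HC; auto.
  + pose proof (HS O z hd hz) as E. simpl in E. rewrite Nat.mod_small in E by auto. exact E.
Qed.

Lemma shannon_unif d : (0 < d)%nat -> shannon d (unif d) = ln (INR d).
Proof.
  intros hd. assert (0 < INR d) by (apply lt_0_INR; auto).
  unfold shannon, unif. rewrite rsum_const, ln_Rinv by auto. field. lra.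
Qed.

Theorem corollary4 (d n m : nat) (W : nat -> Mat) (phi : nat -> Vec) :
  (0 < d)%nat ->
  cq_channel d n W ->
  symmetric_channel d n W ->
  (forall z, (z < d)%nat -> purification n m (W z) (phi z)) ->
  exists I1 I2 : R,
    is_lub (holevo_values d n W) I1 /\
    is_lub (holevo_values d (d * m) (dual_channel d n m phi)) I2 /\
    I1 + I2 = ln (INR d).
Proof.
  intros hd HC HSy HP.
  assert (hn : (0 < n)%nat) by (apply (trace_pos n (W O)), (HC O hd)).
  assert (hm : (0 < m)%nat).
  { destruct m; [|lia]. exfalso. pose proof (trace_meq n _ _ (HP O hd)) as T.
    rewrite (proj2 (proj2 (HC O hd))) in T. unfold mtrace, ptr2 in T. simpl in T.
    rewrite csum_zero in T by auto. unfold C0, C1 in T. injection T. lra. }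
  set (N := (d * m)%nat).
  assert (hN : (0 < N)%nat) by (unfold N; nia).
  set (sW := vN_entropy n (W O)).
  assert (GG : good N (Gd d n m phi)) by (apply (gram_good N n _ (Yd d n m phi O)); unfold Gd; rewrite dual_Y; apply req_refl).
  assert (TG : mtrace N (Gd d n m phi) = C1).
  { unfold Gd. rewrite dual_Y. unfold N. rewrite gram_trace.
    rewrite (trace_meq n _ _ (reshuffle d n m phi W hd hm HP)).
    unfold mtrace, mixM. rewrite csum_swap.
    rewrite (csum_ext _ _ (fun c => Cmul (RtoC (unif d c)) C1)).
    - rewrite csum_mul_r, csum_RtoC, (proj2 (prob_unif d hd)). cring.
    - intros c hc. rewrite csum_mul_l. f_equal. apply (proj2 (proj2 (HC c hc))). }
  assert (EG : vN_entropy N (Gd d n m phi) = vN_entropy n (mixM d (unif d) W)).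
  { unfold Gd. rewrite dual_Y. unfold N. rewrite schmidt.
    symmetry. apply ent_meq. apply (gram_good n N _ (trM (Yd d n m phi O))); apply req_refl. apply (reshuffle d n m phi W hd hm HP). }
  destruct (choose_fam d m (fun c => ptr1 n m (outer (phi c)))) as [UB [LB HB]].
  { intros c hc. split.
    - rewrite ptr1_X. apply (gram_good m n _ (trM (Xc m phi c))), req_refl.
    - rewrite ptr1_X, <- gram_trace, <- (ptr2_X n m phi c). rewrite (trace_meq n _ _ (HP c hc)). apply HC; auto. }
  assert (ED : vN_entropy N (Deph d n m phi) = ln (INR d) + sW).
  { unfold Deph, N. rewrite (cq_entropy d m (unif d) _ UB LB hm (prob_unif d hd) HB).
    rewrite shannon_unif by auto. f_equal.
    rewrite (rsum_ext d _ (fun c => unif d c * sW)).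
    - rewrite rsum_mul_r, (proj2 (prob_unif d hd)). ring.
    - intros c hc. f_equal. rewrite <- (ent_W d m _ UB LB c HB hc).
      rewrite ptr1_X, <- schmidt, <- (ptr2_X n m phi c). unfold sW. rewrite <- (symW d n W hd HC HSy c hc).
      apply ent_meq. apply density_good, HC; auto. apply req_sym, HP; auto. }
  destruct (partA d n W hd HC HSy) as [LA1 LA2].
  pose proof GG as GG0. destruct GG0 as [U0 [L0 [D0 hL0]]].
  assert (hL1 : rsum N L0 = 1) by (rewrite (trace_decomp _ _ _ _ D0) in TG; injection TG; auto).
  exists (vN_entropy n (mixM d (unif d) W) - sW), (vN_entropy N (Deph d n m phi) - vN_entropy N (Gd d n m phi)).
  split; [split; auto|split].
  - apply (holevo_lub d N (dual_channel d n m phi) (fun x => mmul N (Dph d m x) U0) (fun _ => L0) (Dph d m)); auto.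
    + intros x hx. split; [|split; auto].
      apply (decomp_meq _ _ _ _ _ (unitary_conj N _ U0 L0 (Dph d m x) D0 (Dph_unitary d m hd hm N x))).
      apply (conj_dual d n m phi hd hm N x O).
    + intros x hx. apply Dph_unitary; auto.
    + intros z hz. apply HWd; auto.
    + intros z hz. rewrite <- (ent_conj N (Gd d n m phi) (Dph d m z) GG (Dph_unitary d m hd hm N z)).
      apply ent_meq. apply good_conj; auto. apply Dph_unitary; auto.
      pose proof (conj_dual d n m phi hd hm N z O) as E. rewrite Nat.add_0_l in E. exact E.
    + apply (req_trans (B := mixM d (unif d) (fun x => mmul N (mmul N (Dph d m x) (dual_channel d n m phi O)) (adj (Dph d m x))))).
      * intros i j hi hj. unfold mixM. apply csum_ext; intros x hx. f_equal.
        symmetry. apply (conj_dual d n m phi hd hm N x O); auto.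
      * apply HWd; auto.
  - rewrite ED, EG. ring.
Qed.
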